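(* Inconsistency of disjunctive finitely recursive programs is semidecidable: there is a procedure which, given a disjunctive finitely recursive program $P$, halts reporting inconsistency if and only if $P$ has no stable model.
   Context: A disjunctive program is a finite set of rules $A_1\vee\dots\vee A_m\leftarrow L_1,\dots,L_n$ ($m>0$, $n\ge0$), $A_j$ atoms, $L_i$ atoms or negated atoms $\mathtt{not}\,A$, over a first-order language possibly with function symbols (so the Herbrand universe may be infinite); $head(r)=\{A_1,\dots,A_m\}$. $\mathsf{Ground}(P)$ is its ground instantiation. For a set $M$ of ground atoms, $P^M$ is obtained from $\mathsf{Ground}(P)$ by deleting rules having some $\mathtt{not}\,B$ in the body with $B\in M$ and deleting negative literals from the remaining rules; $M$ is a stable model iff it is a minimal Herbrand model of $P^M$. $P$ is inconsistent iff it has no stable model. The dependency graph has ground atoms as vertices and an edge $A\to B$ whenever some $r\in\mathsf{Ground}(P)$ has $A\in head(r)$ and $B$ occurring in $r$ (body, positively or negated, or head); $A$ depends on $B$ if there is a directed path from $A$ to $B$ (every atom depends on itself). $P$ is finitely recursive iff each ground atom depends on finitely many ground atoms. *)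

(* Defs.v *)
From Stdlib Require Import List Arith Relations.
Import ListNotations.

(*    "Procedure" = a mu-recursive program; "halts on x" = the partial *)
(*    function it denotes is defined on the input [x].                  *)

Inductive mu : Type :=
| MZero : mu
| MSucc : mu
| MProj : nat -> mu
| MComp : mu -> list mu -> mu
| MRec  : mu -> mu -> mu
| MMin  : mu -> mu.

Inductive eval : mu -> list nat -> nat -> Prop :=
| ev_zero xs : eval MZero xs 0
| ev_succ xs : eval MSucc xs (S (hd 0 xs))
| ev_proj i xs : eval (MProj i) xs (nth i xs 0)
| ev_comp f gs xs ys y :
    evalL gs xs ys -> eval f ys y -> eval (MComp f gs) xs y
| ev_rec0 g h xs y : eval g xs y -> eval (MRec g h) (0 :: xs) y
| ev_recS g h n xs z y :
    eval (MRec g h) (n :: xs) z -> eval h (n :: z :: xs) y ->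
    eval (MRec g h) (S n :: xs) y
| ev_min f xs n :
    eval f (n :: xs) 0 ->
    (forall m, m < n -> exists k, eval f (m :: xs) (S k)) ->
    eval (MMin f) xs n
with evalL : list mu -> list nat -> list nat -> Prop :=
| evL_nil xs : evalL [] xs []
| evL_cons g gs xs y ys :
    eval g xs y -> evalL gs xs ys -> evalL (g :: gs) xs (y :: ys).

Definition halts (e : mu) (x : nat) : Prop := exists y, eval e [x] y.

(*    Function symbols are identified by a name (nat) together with     *)
(*    their arity (the length of the argument list); same for predicates.*)

Inductive term : Type :=
| Var : nat -> term
| Fn  : nat -> list term -> term.

Record atom : Type := Atom { pred : nat; args : list term }.

Inductive literal : Type :=
| Pos : atom -> literal
| Neg : atom -> literal.

Record rule : Type := Rule { head : list atom; body : list literal }.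

Definition program := list rule.

Definition wf_program (P : program) : Prop :=
  forall r, In r P -> head r <> [].

Definition cpair (x y : nat) : nat := (x + y) * (x + y + 1) / 2 + y.

Definition enc_list {A : Type} (e : A -> nat) : list A -> nat :=
  fix go l := match l with [] => 0 | x :: l' => S (cpair (e x) (go l')) end.

Fixpoint enc_term (t : term) : nat :=
  match t with
  | Var n => cpair 0 n
  | Fn f ts =>
      cpair 1 (cpair f ((fix go l := match l with
                                     | [] => 0
                                     | u :: l' => S (cpair (enc_term u) (go l'))
                                     end) ts))
  end.

Definition enc_atom (a : atom) : nat := cpair (pred a) (enc_list enc_term (args a)).

Definition enc_literal (l : literal) : nat :=
  match l with Pos a => cpair 0 (enc_atom a) | Neg a => cpair 1 (enc_atom a) end.

Definition enc_rule (r : rule) : nat :=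
  cpair (enc_list enc_atom (head r)) (enc_list enc_literal (body r)).

Definition enc_program (P : program) : nat := enc_list enc_rule P.

Fixpoint sym_in_term (f n : nat) (t : term) : Prop :=
  match t with
  | Var _ => False
  | Fn g ts =>
      (g = f /\ length ts = n) \/
      (fix go l := match l with [] => False | u :: l' => sym_in_term f n u \/ go l' end) ts
  end.

Definition sym_in_atom (f n : nat) (a : atom) : Prop :=
  exists t, In t (args a) /\ sym_in_term f n t.

Definition lit_atom (l : literal) : atom := match l with Pos a => a | Neg a => a end.

Definition rule_atoms (r : rule) : list atom := head r ++ map lit_atom (body r).

Definition sym_in_program (P : program) (f n : nat) : Prop :=
  exists r a, In r P /\ In a (rule_atoms r) /\ sym_in_atom f n a.

(* Herbrand universe of the language of P: ground terms built from the
   function symbols (with their arities) of P; if P has no constant, a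
   fresh constant (Fn 0 []) is added, as usual. *)
Inductive in_HU (P : program) : term -> Prop :=
| hu_fn f ts : sym_in_program P f (length ts) -> Forall (in_HU P) ts -> in_HU P (Fn f ts)
| hu_default : (forall f, ~ sym_in_program P f 0) -> in_HU P (Fn 0 []).

(* ground atoms of the language of P (Herbrand base, predicates arbitrary) *)
Definition ground_atom (P : program) (a : atom) : Prop := Forall (in_HU P) (args a).

Fixpoint subst_term (s : nat -> term) (t : term) : term :=
  match t with
  | Var x => s x
  | Fn f ts => Fn f (map (subst_term s) ts)
  end.

Definition subst_atom (s : nat -> term) (a : atom) : atom :=
  Atom (pred a) (map (subst_term s) (args a)).

Definition subst_literal (s : nat -> term) (l : literal) : literal :=
  match l with Pos a => Pos (subst_atom s a) | Neg a => Neg (subst_atom s a) end.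

Definition subst_rule (s : nat -> term) (r : rule) : rule :=
  Rule (map (subst_atom s) (head r)) (map (subst_literal s) (body r)).

Definition ground_rule (P : program) (g : rule) : Prop :=
  exists r s, In r P /\ (forall x, in_HU P (s x)) /\ g = subst_rule s r.

Definition interp := atom -> Prop.

Definition pos_body (r : rule) : list atom :=
  flat_map (fun l => match l with Pos a => [a] | Neg _ => [] end) (body r).
Definition neg_body (r : rule) : list atom :=
  flat_map (fun l => match l with Pos _ => [] | Neg a => [a] end) (body r).

Definition in_reduct (P : program) (M : interp) (g : rule) : Prop :=
  exists g0, ground_rule P g0 /\ (forall B, In B (neg_body g0) -> ~ M B) /\
             g = Rule (head g0) (map Pos (pos_body g0)).

Definition model_of_reduct (P : program) (M N : interp) : Prop :=
  forall g, in_reduct P M g ->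
    (forall B, In B (pos_body g) -> N B) -> exists A, In A (head g) /\ N A.

Definition herbrand_interp (P : program) (N : interp) : Prop :=
  forall A, N A -> ground_atom P A.

Definition stable_model (P : program) (M : interp) : Prop :=
  herbrand_interp P M /\ model_of_reduct P M M /\
  (forall N, herbrand_interp P N -> (forall A, N A -> M A) ->
             model_of_reduct P M N -> forall A, M A -> N A).

Definition inconsistent (P : program) : Prop := ~ exists M, stable_model P M.

Definition dep_edge (P : program) (A B : atom) : Prop :=
  exists g, ground_rule P g /\ In A (head g) /\ In B (rule_atoms g).

Definition depends (P : program) : atom -> atom -> Prop :=
  clos_refl_trans atom (dep_edge P).

Definition finitely_recursive (P : program) : Prop :=
  forall A, ground_atom P A ->
    exists l : list atom, forall B, depends P A B -> In B l.

(* Main.v *)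
Require Import Defs.
From Stdlib Require Import List.
Import ListNotations.
From Stdlib Require Import Arith Lia Bool Setoid Morphisms FunctionalExtensionality Classical ClassicalEpsilon Relations.
Require Import Defs.

Inductive ex : Type :=
| EZ : ex
| ES : ex -> ex
| EV : nat -> ex
| ER : ex -> ex -> ex -> ex.

Definition scons (x : nat) (env : nat -> nat) : nat -> nat :=
  fun i => match i with 0 => x | S j => env j end.

Fixpoint recf (b : nat) (h : nat -> nat -> nat) (n : nat) : nat :=
  match n with 0 => b | S m => h m (recf b h m) end.

Fixpoint den (e : ex) (env : nat -> nat) : nat :=
  match e with
  | EZ => 0
  | ES a => S (den a env)
  | EV i => env i
  | ER n g h => recf (den g env) (fun m acc => den h (scons m (scons acc env))) (den n env)
  end.

Fixpoint fvb (e : ex) : nat :=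
  match e with
  | EZ => 0 | ES a => fvb a | EV i => S i
  | ER n g h => max (fvb n) (max (fvb g) (fvb h - 2))
  end.

Fixpoint compile (e : ex) : mu :=
  match e with
  | EZ => MZero
  | ES a => MComp MSucc [compile a]
  | EV i => MProj i
  | ER n g h => MComp (MRec (compile g) (compile h))
                  (compile n :: map MProj (seq 0 (max (fvb g) (fvb h - 2))))
  end.

Lemma recf_ext : forall b h1 h2 n, (forall m a, h1 m a = h2 m a) -> recf b h1 n = recf b h2 n.
Proof. induction n; simpl; intros; auto. rewrite IHn; auto. Qed.

Lemma den_ext : forall e env1 env2, (forall i, i < fvb e -> env1 i = env2 i) ->
  den e env1 = den e env2.
Proof.
  induction e; simpl; intros env1 env2 H; auto.
  - rewrite (IHe2 env1 env2) by (intros; apply H; lia).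
    rewrite (IHe1 env1 env2) by (intros; apply H; lia).
    apply recf_ext. intros m a. apply IHe3.
    intros [|[|i]] Hi; simpl; auto. apply H; lia.
Qed.

Lemma den_ext_all : forall e env1 env2, (forall i, env1 i = env2 i) -> den e env1 = den e env2.
Proof. intros; apply den_ext; auto. Qed.

Lemma nth_map_seq : forall (f : nat -> nat) n i, i < n -> nth i (map f (seq 0 n)) 0 = f i.
Proof.
  intros. rewrite nth_indep with (d' := f 0) by (rewrite length_map, length_seq; lia).
  rewrite map_nth, seq_nth by lia. reflexivity.
Qed.

Lemma evalL_proj : forall xs l, evalL (map MProj l) xs (map (fun i => nth i xs 0) l).
Proof. induction l; simpl; constructor; auto. constructor. Qed.

Theorem compile_ok : forall e xs, eval (compile e) xs (den e (fun i => nth i xs 0)).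
Proof.
  induction e; intros xs; simpl.
  - constructor.
  - econstructor. constructor. apply IHe. constructor. constructor.
  - constructor.
  - set (N := max (fvb e2) (fvb e3 - 2)).
    set (envl := map (fun i => nth i xs 0) (seq 0 N)).
    econstructor.
    + constructor. apply IHe1. apply evalL_proj.
    + assert (Hagree : forall i, i < N -> nth i envl 0 = nth i xs 0).
      { intros i Hi. unfold envl. apply (nth_map_seq (fun j => nth j xs 0)); auto. }
      generalize (den e1 (fun i => nth i xs 0)). intro n.
      induction n; simpl.
      * constructor. rewrite (den_ext e2 (fun i => nth i xs 0) (fun i => nth i envl 0)).
        apply IHe2. intros i Hi. symmetry. apply Hagree. unfold N; lia.
      * econstructor. apply IHn.
        rewrite (den_ext e3 _ (fun i => nth i (n :: recf (den e2 (fun i0 => nth i0 xs 0))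
           (fun m acc => den e3 (scons m (scons acc (fun i0 => nth i0 xs 0)))) n :: envl) 0)).
        apply IHe3.
        intros [|[|i]] Hi; simpl; auto. symmetry; apply Hagree. unfold N; lia.
Qed.

Definition up2 (r : nat -> nat) (i : nat) : nat :=
  match i with 0 => 0 | 1 => 1 | S (S j) => S (S (r j)) end.

Fixpoint ren (r : nat -> nat) (e : ex) : ex :=
  match e with
  | EZ => EZ | ES a => ES (ren r a) | EV i => EV (r i)
  | ER n g h => ER (ren r n) (ren r g) (ren (up2 r) h)
  end.

Lemma den_ren : forall e r env, den (ren r e) env = den e (fun i => env (r i)).
Proof.
  induction e; intros r env; simpl; auto.
  rewrite IHe1, IHe2. apply recf_ext. intros m a. rewrite IHe3.
  apply den_ext_all. intros [|[|i]]; reflexivity.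
Qed.

Definition lift (k : nat) (e : ex) : ex := ren (fun i => k + i) e.
Definition skip1 (i : nat) : nat := match i with 0 => 0 | S j => S (S j) end.
Definition letr (i : nat) : nat := match i with 0 => 1 | S j => S (S j) end.

Lemma den_lift1 : forall e m env, den (lift 1 e) (scons m env) = den e env.
Proof. intros. unfold lift. rewrite den_ren. apply den_ext_all. reflexivity. Qed.
Lemma den_lift2 : forall e m a env, den (lift 2 e) (scons m (scons a env)) = den e env.
Proof. intros. unfold lift. rewrite den_ren. apply den_ext_all. reflexivity. Qed.
Lemma den_skip1 : forall e m a env, den (ren skip1 e) (scons m (scons a env)) = den e (scons m env).
Proof. intros. rewrite den_ren. apply den_ext_all. intros [|i]; reflexivity. Qed.
Lemma den_letr : forall e m a env, den (ren letr e) (scons m (scons a env)) = den e (scons a env).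
Proof. intros. rewrite den_ren. apply den_ext_all. intros [|i]; reflexivity. Qed.

Definition b2n (b : bool) : nat := if b then 1 else 0.
Definition n2b (n : nat) : bool := negb (n =? 0).

Fixpoint bsum (f : nat -> nat) (n : nat) : nat :=
  match n with 0 => 0 | S m => bsum f m + f m end.

Definition eadd a b := ER a b (ES (EV 1)).
Lemma den_eadd : forall a b env, den (eadd a b) env = den a env + den b env.
Proof. intros; unfold eadd; simpl. induction (den a env); simpl; auto. Qed.
Global Opaque eadd.

Definition epred a := ER a EZ (EV 0).
Lemma den_epred : forall a env, den (epred a) env = Nat.pred (den a env).
Proof. intros; unfold epred; simpl. destruct (den a env); simpl; auto. Qed.
Global Opaque epred.

Definition esub a b := ER b a (epred (EV 1)).
Lemma den_esub : forall a b env, den (esub a b) env = den a env - den b env.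
Proof.
  intros; unfold esub; simpl. induction (den b env); simpl. lia.
  rewrite den_epred. simpl. rewrite IHn. lia.
Qed.
Global Opaque esub.

Definition emul a b := ER a EZ (eadd (EV 1) (lift 2 b)).
Lemma den_emul : forall a b env, den (emul a b) env = den a env * den b env.
Proof.
  intros; unfold emul; simpl. induction (den a env); simpl; auto.
  rewrite den_eadd, den_lift2. simpl. rewrite IHn. lia.
Qed.
Global Opaque emul.

Definition eif c a b := ER c b (lift 2 a).
Lemma den_eif : forall c a b env,
  den (eif c a b) env = if den c env =? 0 then den b env else den a env.
Proof.
  intros; unfold eif; simpl. destruct (den c env); simpl; auto. apply den_lift2.
Qed.
Global Opaque eif.

Fixpoint econst (n : nat) : ex := match n with 0 => EZ | S m => ES (econst m) end.
Lemma den_econst : forall n env, den (econst n) env = n.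
Proof. induction n; simpl; auto. Qed.
Global Opaque econst.

Definition eisz a := eif a EZ (ES EZ).
Lemma den_eisz : forall a env, den (eisz a) env = b2n (den a env =? 0).
Proof. intros; unfold eisz. unfold eisz. rewrite den_eif. destruct (den a env); reflexivity. Qed.
Global Opaque eisz.

Definition eeq a b := eisz (eadd (esub a b) (esub b a)).
Lemma den_eeq : forall a b env, den (eeq a b) env = b2n (den a env =? den b env).
Proof.
  intros; unfold eeq. unfold eeq. rewrite den_eisz, den_eadd, !den_esub.
  destruct (Nat.eqb_spec (den a env) (den b env));
  destruct (Nat.eqb_spec (den a env - den b env + (den b env - den a env)) 0); auto; lia.
Qed.
Global Opaque eeq.

Definition ele a b := eisz (esub a b).
Lemma den_ele : forall a b env, den (ele a b) env = b2n (den a env <=? den b env).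
Proof.
  intros; unfold ele. unfold ele. rewrite den_eisz, den_esub.
  destruct (Nat.leb_spec (den a env) (den b env));
  destruct (Nat.eqb_spec (den a env - den b env) 0); auto; lia.
Qed.
Global Opaque ele.

Definition eand a b := eif a (eif b (ES EZ) EZ) EZ.
Lemma den_eand : forall a b env, den (eand a b) env = b2n (n2b (den a env) && n2b (den b env)).
Proof.
  intros; unfold eand. unfold eand. rewrite !den_eif. unfold n2b.
  destruct (den a env); destruct (den b env); reflexivity.
Qed.
Global Opaque eand.
Definition eor a b := eif a (ES EZ) (eif b (ES EZ) EZ).
Lemma den_eor : forall a b env, den (eor a b) env = b2n (n2b (den a env) || n2b (den b env)).
Proof.
  intros; unfold eor. unfold eor. rewrite !den_eif. unfold n2b.
  destruct (den a env); destruct (den b env); reflexivity.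
Qed.
Global Opaque eor.
Definition enot a := eisz a.
Lemma den_enot : forall a env, den (enot a) env = b2n (negb (n2b (den a env))).
Proof. intros; unfold enot. unfold enot. rewrite den_eisz. unfold n2b. destruct (den a env); reflexivity. Qed.
Global Opaque enot.

Definition esum n body := ER n EZ (eadd (EV 1) (ren skip1 body)).
Lemma den_esum : forall n body env,
  den (esum n body) env = bsum (fun i => den body (scons i env)) (den n env).
Proof.
  intros; unfold esum; simpl. induction (den n env); simpl; auto.
  rewrite den_eadd, den_skip1. simpl. rewrite IHn0. auto.
Qed.
Global Opaque esum.

Definition elet x body := ER (ES EZ) x (ren letr body).
Lemma den_elet : forall x body env, den (elet x body) env = den body (scons (den x env) env).
Proof. intros; unfold elet; simpl. apply den_letr. Qed.
Global Opaque elet.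

Fixpoint bex (f : nat -> bool) (n : nat) : bool :=
  match n with 0 => false | S m => bex f m || f m end.
Fixpoint ball (f : nat -> bool) (n : nat) : bool :=
  match n with 0 => true | S m => ball f m && f m end.

Lemma bex_spec : forall f n, bex f n = true <-> exists i, i < n /\ f i = true.
Proof.
  induction n; simpl. split; [discriminate| intros [i [Hi _]]; lia].
  rewrite Bool.orb_true_iff, IHn. split.
  - intros [[i [Hi Hf]]|Hf]; [exists i; split; auto; lia | exists n; auto].
  - intros [i [Hi Hf]]. destruct (Nat.eq_dec i n). subst; auto. left; exists i; split; auto; lia.
Qed.
Lemma ball_spec : forall f n, ball f n = true <-> forall i, i < n -> f i = true.
Proof.
  induction n; simpl. split; auto; intros; lia.
  rewrite Bool.andb_true_iff, IHn. split.
  - intros [H1 H2] i Hi. destruct (Nat.eq_dec i n). subst; auto. apply H1; lia.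
  - intros H; split; auto.
Qed.

Lemma bsum_pos : forall f n, bsum f n <> 0 <-> exists i, i < n /\ f i <> 0.
Proof.
  induction n; simpl. split; [tauto| intros [i [Hi _]]; lia].
  split.
  - intros H. destruct (f n) eqn:E. rewrite Nat.add_0_r in H. apply IHn in H.
    destruct H as [i [Hi Hf]]; exists i; split; auto; lia.
    exists n; split; auto; lia.
  - intros [i [Hi Hf]]. destruct (Nat.eq_dec i n). subst; lia.
    assert (bsum f n <> 0) by (apply IHn; exists i; split; auto; lia). lia.
Qed.

Definition eex n body := eif (esum n (eif body (ES EZ) EZ)) (ES EZ) EZ.
Lemma den_eex : forall n body env,
  den (eex n body) env = b2n (bex (fun i => n2b (den body (scons i env))) (den n env)).
Proof.
  intros; unfold eex. unfold eex. rewrite den_eif, den_esum.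
  destruct (bex (fun i => n2b (den body (scons i env))) (den n env)) eqn:E.
  - apply bex_spec in E. destruct E as [i [Hi Hf]].
    assert (bsum (fun i0 => den (eif body (ES EZ) EZ) (scons i0 env)) (den n env) <> 0).
    { apply bsum_pos. exists i; split; auto. rewrite den_eif. unfold n2b in Hf.
      destruct (den body (scons i env)); simpl in *; auto; discriminate. }
    destruct (Nat.eqb_spec (bsum (fun i0 => den (eif body (ES EZ) EZ) (scons i0 env)) (den n env)) 0); auto; lia.
  - destruct (Nat.eqb_spec (bsum (fun i0 => den (eif body (ES EZ) EZ) (scons i0 env)) (den n env)) 0); auto.
    apply bsum_pos in n0. destruct n0 as [i [Hi Hf]].
    assert (bex (fun i => n2b (den body (scons i env))) (den n env) = true).
    { apply bex_spec. exists i; split; auto. rewrite den_eif in Hf. unfold n2b.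
      destruct (den body (scons i env)); simpl in *; auto. }
    congruence.
Qed.
Global Opaque eex.

Definition eall n body := enot (eex n (enot body)).
Lemma den_eall : forall n body env,
  den (eall n body) env = b2n (ball (fun i => n2b (den body (scons i env))) (den n env)).
Proof.
  intros; unfold eall. unfold eall. rewrite den_enot, den_eex.
  destruct (ball (fun i => n2b (den body (scons i env))) (den n env)) eqn:E.
  - rewrite ball_spec in E.
    destruct (bex _ _) eqn:E2; auto. apply bex_spec in E2. destruct E2 as [i [Hi Hf]].
    specialize (E i Hi). rewrite den_enot in Hf. simpl in Hf.
    destruct (n2b (den body (scons i env))); simpl in *; discriminate.
  - destruct (bex _ _) eqn:E2; auto. exfalso.
    assert (ball (fun i => n2b (den body (scons i env))) (den n env) = true); [|congruence].
    apply ball_spec. intros i Hi.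
    destruct (n2b (den body (scons i env))) eqn:E3; auto. exfalso.
    assert (bex (fun i0 => n2b (den (enot body) (scons i0 env))) (den n env) = true); [|congruence].
    apply bex_spec. exists i; split; auto. rewrite den_enot, E3. reflexivity.
Qed.
Global Opaque eall.

Fixpoint Tf (k : nat) : nat := match k with 0 => 0 | S m => Tf m + S m end.

Lemma Tf_double : forall k, 2 * Tf k = k * (k + 1).
Proof. induction k; simpl Tf; [reflexivity|]. rewrite Nat.mul_add_distr_l, IHk. lia. Qed.

Lemma cpair_Tf : forall x y, cpair x y = Tf (x + y) + y.
Proof.
  intros. unfold cpair. f_equal. rewrite <- Tf_double.
  rewrite Nat.mul_comm. apply Nat.div_mul. lia.
Qed.

Lemma Tf_ge : forall k, k <= Tf k.
Proof. induction k; simpl; lia. Qed.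

Lemma Tf_mono : forall a b, a <= b -> Tf a <= Tf b.
Proof. intros a b H; induction H; simpl; lia. Qed.

Lemma Tf_uniq : forall a b z, Tf a <= z < Tf (S a) -> Tf b <= z < Tf (S b) -> a = b.
Proof.
  intros a b z Ha Hb.
  destruct (Nat.lt_trichotomy a b) as [H|[H|H]]; auto.
  - assert (Tf (S a) <= Tf b) by (apply Tf_mono; lia). lia.
  - assert (Tf (S b) <= Tf a) by (apply Tf_mono; lia). lia.
Qed.

Fixpoint sqf (z : nat) : nat :=
  match z with 0 => 0 | S m => if Tf (S (sqf m)) <=? S m then S (sqf m) else sqf m end.

Lemma sqf_spec : forall z, Tf (sqf z) <= z < Tf (S (sqf z)).
Proof.
  induction z. simpl; lia.
  change (sqf (S z)) with (if Tf (S (sqf z)) <=? S z then S (sqf z) else sqf z).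
  destruct (Nat.leb_spec (Tf (S (sqf z))) (S z)) as [H|H].
  - change (Tf (S (S (sqf z)))) with (Tf (S (sqf z)) + S (S (sqf z))). lia.
  - lia.
Qed.

Definition unp2 (z : nat) : nat := z - Tf (sqf z).
Definition unp1 (z : nat) : nat := sqf z - unp2 z.

Lemma unp_cpair : forall x y, unp1 (cpair x y) = x /\ unp2 (cpair x y) = y.
Proof.
  intros. rewrite cpair_Tf.
  assert (sqf (Tf (x + y) + y) = x + y).
  { apply (Tf_uniq _ _ (Tf (x + y) + y)). apply sqf_spec. simpl. lia. }
  unfold unp1, unp2. rewrite H. lia.
Qed.
Lemma unp1_cpair : forall x y, unp1 (cpair x y) = x. Proof. apply unp_cpair. Qed.
Lemma unp2_cpair : forall x y, unp2 (cpair x y) = y. Proof. apply unp_cpair. Qed.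

Lemma cpair_unp : forall z, cpair (unp1 z) (unp2 z) = z.
Proof.
  intros. rewrite cpair_Tf. pose proof (sqf_spec z). simpl in H.
  unfold unp1, unp2. replace (sqf z - (z - Tf (sqf z)) + (z - Tf (sqf z))) with (sqf z) by lia.
  lia.
Qed.

Lemma cpair_ge1 : forall x y, x <= cpair x y.
Proof. intros. rewrite cpair_Tf. pose proof (Tf_ge (x+y)). lia. Qed.
Lemma cpair_ge2 : forall x y, y <= cpair x y.
Proof. intros. rewrite cpair_Tf. lia. Qed.
Lemma cpair_inj : forall x y x' y', cpair x y = cpair x' y' -> x = x' /\ y = y'.
Proof.
  intros. split.
  - rewrite <- (unp1_cpair x y), <- (unp1_cpair x' y'). congruence.
  - rewrite <- (unp2_cpair x y), <- (unp2_cpair x' y'). congruence.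
Qed.
Lemma unp1_le : forall z, unp1 z <= z.
Proof. intros. rewrite <- (cpair_unp z) at 2. apply cpair_ge1. Qed.
Lemma unp2_le : forall z, unp2 z <= z.
Proof. intros. rewrite <- (cpair_unp z) at 2. apply cpair_ge2. Qed.

Definition eT a := ER a EZ (eadd (EV 1) (ES (EV 0))).
Lemma den_eT : forall a env, den (eT a) env = Tf (den a env).
Proof.
  intros; unfold eT; simpl. induction (den a env); simpl; auto.
  rewrite den_eadd. simpl. rewrite IHn. lia.
Qed.
Global Opaque eT.

Definition ecpair a b := eadd (eT (eadd a b)) b.
Lemma den_ecpair : forall a b env, den (ecpair a b) env = cpair (den a env) (den b env).
Proof. intros; unfold ecpair. rewrite den_eadd, den_eT, den_eadd, cpair_Tf. reflexivity. Qed.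
Global Opaque ecpair.

Definition esq a := ER a EZ (eif (ele (eT (ES (EV 1))) (ES (EV 0))) (ES (EV 1)) (EV 1)).
Lemma den_esq : forall a env, den (esq a) env = sqf (den a env).
Proof.
  intros; unfold esq; simpl. induction (den a env); simpl; auto.
  rewrite den_eif, den_ele, den_eT. simpl. rewrite IHn.
  change (Tf (S (sqf n))) with (Tf (sqf n) + S (sqf n)).
  destruct (Tf (sqf n) + S (sqf n) <=? S n); reflexivity.
Qed.
Global Opaque esq.

Definition eunp2 a := esub a (eT (esq a)).
Lemma den_eunp2 : forall a env, den (eunp2 a) env = unp2 (den a env).
Proof. intros; unfold eunp2. rewrite den_esub, den_eT, den_esq. reflexivity. Qed.
Global Opaque eunp2.
Definition eunp1 a := esub (esq a) (eunp2 a).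
Lemma den_eunp1 : forall a env, den (eunp1 a) env = unp1 (den a env).
Proof. intros; unfold eunp1. rewrite den_esub, den_eunp2, den_esq. reflexivity. Qed.
Global Opaque eunp1.

Fixpoint encl (l : list nat) : nat :=
  match l with [] => 0 | x :: r => S (cpair x (encl r)) end.

Fixpoint decLf (f c : nat) : list nat :=
  match f with 0 => [] | S f' => match c with 0 => [] | S c' => unp1 c' :: decLf f' (unp2 c') end end.
Definition decL (c : nat) : list nat := decLf c c.

Lemma encl_decLf : forall f c, c <= f -> encl (decLf f c) = c.
Proof.
  induction f; intros c Hc; simpl. lia.
  destruct c; simpl; auto. rewrite IHf. rewrite cpair_unp. auto.
  pose proof (unp2_le c). lia.
Qed.
Lemma decLf_encl : forall l f, encl l <= f -> decLf f (encl l) = l.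
Proof.
  induction l; intros f Hf; destruct f; simpl in *; auto; try lia.
  rewrite unp1_cpair, unp2_cpair. rewrite IHl; auto.
  pose proof (cpair_ge2 a (encl l)). lia.
Qed.
Lemma encl_decL : forall c, encl (decL c) = c.
Proof. intros; apply encl_decLf; auto. Qed.
Lemma decL_encl : forall l, decL (encl l) = l.
Proof. intros; apply decLf_encl; auto. Qed.
Lemma encl_inj : forall l l', encl l = encl l' -> l = l'.
Proof. intros. rewrite <- (decL_encl l), <- (decL_encl l'). congruence. Qed.
Lemma decL_0 : decL 0 = [].
Proof. reflexivity. Qed.
Lemma decL_cons : forall x c, decL (S (cpair x c)) = x :: decL c.
Proof.
  intros. rewrite <- (encl_decL c) at 1.
  change (S (cpair x (encl (decL c)))) with (encl (x :: decL c)). apply decL_encl.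
Qed.
Lemma decL_S : forall c, decL (S c) = unp1 c :: decL (unp2 c).
Proof. intros. rewrite <- (cpair_unp c) at 1. apply decL_cons. Qed.
Global Opaque decL.

Lemma length_le_encl : forall l, length l <= encl l.
Proof. induction l; simpl; auto. pose proof (cpair_ge2 a (encl l)). lia. Qed.
Lemma elem_lt_encl : forall l x, In x l -> x < encl l.
Proof.
  induction l; simpl; intros x H; [tauto|]. destruct H.
  subst. pose proof (cpair_ge1 x (encl l)). lia.
  apply IHl in H. pose proof (cpair_ge2 a (encl l)). lia.
Qed.
Lemma elem_lt_code : forall c x, In x (decL c) -> x < c.
Proof. intros. rewrite <- (encl_decL c). apply elem_lt_encl; auto. Qed.

Definition ehd c := eunp1 (epred c).
Definition etl c := eunp2 (epred c).
Lemma den_ehd : forall c env, den (ehd c) env = hd 0 (decL (den c env)).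
Proof.
  intros; unfold ehd. rewrite den_eunp1, den_epred.
  destruct (den c env); simpl. reflexivity. rewrite decL_S. reflexivity.
Qed.
Lemma den_etl : forall c env, den (etl c) env = encl (tl (decL (den c env))).
Proof.
  intros; unfold etl. rewrite den_eunp2, den_epred.
  destruct (den c env); simpl. reflexivity. rewrite decL_S. simpl. rewrite encl_decL. reflexivity.
Qed.
Global Opaque ehd etl.

Definition econs x l := ES (ecpair x l).
Lemma den_econs : forall x l env, den (econs x l) env = S (cpair (den x env) (den l env)).
Proof. intros; unfold econs; simpl. rewrite den_ecpair. reflexivity. Qed.
Global Opaque econs.

Definition edrop n l := ER n l (etl (EV 1)).
Lemma den_edrop : forall n l env, den (edrop n l) env = encl (skipn (den n env) (decL (den l env))).
Proof.
  intros; unfold edrop; simpl. induction (den n env); simpl.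
  - rewrite encl_decL. reflexivity.
  - rewrite den_etl. simpl. rewrite IHn0, decL_encl.
    generalize (decL (den l env)). clear. induction n0; intros [|a l]; simpl; auto.
Qed.
Global Opaque edrop.

Lemma nth_hd_skipn : forall (L : list nat) n, nth n L 0 = hd 0 (skipn n L).
Proof. induction L; destruct n; simpl; auto. Qed.

Definition enth n l := ehd (edrop n l).
Lemma den_enth : forall n l env, den (enth n l) env = nth (den n env) (decL (den l env)) 0.
Proof. intros; unfold enth. rewrite den_ehd, den_edrop, decL_encl, nth_hd_skipn. reflexivity. Qed.
Global Opaque enth.

Lemma bsum_ind : forall m c, bsum (fun i => b2n (i <? m)) c = Nat.min c m.
Proof.
  induction c; cbn [bsum]; auto. rewrite IHc.
  destruct (Nat.ltb_spec c m); unfold b2n; lia.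
Qed.

Lemma bsum_ext : forall f g n, (forall i, i < n -> f i = g i) -> bsum f n = bsum g n.
Proof. induction n; simpl; intros; auto. rewrite IHn, H; auto. Qed.

Definition elen l := esum l (eif (edrop (EV 0) (lift 1 l)) (ES EZ) EZ).
Lemma den_elen : forall l env, den (elen l) env = length (decL (den l env)).
Proof.
  intros; unfold elen. rewrite den_esum.
  rewrite (bsum_ext _ (fun i => b2n (i <? length (decL (den l env))))).
  - rewrite bsum_ind. pose proof (length_le_encl (decL (den l env))). rewrite encl_decL in H. lia.
  - intros i _. rewrite den_eif, den_edrop, den_lift1. simpl.
    destruct (Nat.ltb_spec i (length (decL (den l env)))).
    + destruct (skipn i (decL (den l env))) eqn:E; simpl; auto.
      apply (f_equal (@length nat)) in E. rewrite length_skipn in E. simpl in E; lia.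
    + rewrite skipn_all2 by lia. reflexivity.
Qed.
Global Opaque elen.

Lemma bex_nth : forall f L, bex (fun i => f (nth i L 0)) (length L) = existsb f L.
Proof.
  intros. apply eq_true_iff_eq. rewrite bex_spec, existsb_exists. split.
  - intros [i [Hi Hf]]. exists (nth i L 0). split; auto. apply nth_In; auto.
  - intros [x [Hx Hf]]. apply In_nth with (d := 0) in Hx. destruct Hx as [i [Hi Hn]].
    exists i. subst; auto.
Qed.
Lemma ball_nth : forall f L, ball (fun i => f (nth i L 0)) (length L) = forallb f L.
Proof.
  intros. apply eq_true_iff_eq. rewrite ball_spec, forallb_forall. split.
  - intros H x Hx. apply In_nth with (d := 0) in Hx. destruct Hx as [i [Hi Hn]]. subst; auto.
  - intros H i Hi. apply H. apply nth_In; auto.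
Qed.
Lemma bex_ext : forall f g n, (forall i, i < n -> f i = g i) -> bex f n = bex g n.
Proof. induction n; simpl; intros; auto. rewrite IHn, H; auto. Qed.
Lemma ball_ext : forall f g n, (forall i, i < n -> f i = g i) -> ball f n = ball g n.
Proof. induction n; simpl; intros; auto. rewrite IHn, H; auto. Qed.

Definition emem x l := eex (elen l) (eeq (enth (EV 0) (lift 1 l)) (lift 1 x)).
Lemma den_emem : forall x l env,
  den (emem x l) env = b2n (existsb (fun y => y =? den x env) (decL (den l env))).
Proof.
  intros; unfold emem. rewrite den_eex, den_elen. f_equal.
  rewrite <- bex_nth. apply bex_ext. intros i _.
  rewrite den_eeq, den_enth, !den_lift1. simpl. unfold n2b, b2n.
  destruct (nth i (decL (den l env)) 0 =? den x env); reflexivity.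
Qed.
Global Opaque emem.

Definition eexl l body := eex (elen l) (elet (enth (EV 0) (lift 1 l)) (ren skip1 body)).
Lemma den_eexl : forall l body env,
  den (eexl l body) env = b2n (existsb (fun y => n2b (den body (scons y env))) (decL (den l env))).
Proof.
  intros; unfold eexl. rewrite den_eex, den_elen. f_equal.
  rewrite <- bex_nth. apply bex_ext. intros i _.
  rewrite den_elet, den_enth, den_lift1, den_skip1. reflexivity.
Qed.
Global Opaque eexl.

Definition eallL l body := eall (elen l) (elet (enth (EV 0) (lift 1 l)) (ren skip1 body)).
Lemma den_eallL : forall l body env,
  den (eallL l body) env = b2n (forallb (fun y => n2b (den body (scons y env))) (decL (den l env))).
Proof.
  intros; unfold eallL. rewrite den_eall, den_elen. f_equal.
  rewrite <- ball_nth. apply ball_ext. intros i _.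
  rewrite den_elet, den_enth, den_lift1, den_skip1. reflexivity.
Qed.
Global Opaque eallL.

Definition r3 (i : nat) : nat := match i with 0 => 0 | S j => S (S (S j)) end.
Lemma den_r3 : forall f x m a env, den (ren r3 f) (scons x (scons m (scons a env))) = den f (scons x env).
Proof. intros. rewrite den_ren. apply den_ext_all. intros [|i]; reflexivity. Qed.

Lemma skipn_nth_cons : forall (L : list nat) i, i < length L -> skipn i L = nth i L 0 :: skipn (S i) L.
Proof. induction L; intros [|i] H; simpl in *; try lia; auto. apply IHL; lia. Qed.

Lemma build_inv : forall (G : nat -> list nat -> nat) (L : list nat) m, m <= length L ->
  (forall k, k < length L -> forall acc, G k acc = G k acc) ->
  recf 0 (fun m acc => G (length L - 1 - m) (decL acc)) m =
  recf 0 (fun m acc => G (length L - 1 - m) (decL acc)) m.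
Proof. auto. Qed.

Definition lenm1m (l : ex) := esub (esub (elen l) (ES EZ)) (EV 0).

Definition emap f l :=
  ER (elen l) EZ (econs (elet (enth (lenm1m (lift 2 l)) (lift 2 l)) (ren r3 f)) (EV 1)).
Lemma den_emap : forall f l env,
  den (emap f l) env = encl (map (fun y => den f (scons y env)) (decL (den l env))).
Proof.
  intros; unfold emap; simpl. rewrite den_elen. set (L := decL (den l env)).
  set (F := fun y => den f (scons y env)).
  assert (forall m, m <= length L -> recf 0 (fun m0 acc => den (econs (elet (enth (lenm1m (lift 2 l)) (lift 2 l)) (ren r3 f)) (EV 1))
      (scons m0 (scons acc env))) m = encl (map F (skipn (length L - m) L))).
  { induction m; intros Hm; simpl.
    - rewrite skipn_all2 by lia. reflexivity.
    - rewrite IHm by lia. rewrite den_econs, den_elet, den_r3, den_enth. unfold lenm1m.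
      rewrite !den_esub, den_elen, !den_lift2. simpl. fold L.
      rewrite (skipn_nth_cons L (length L - S m)) by lia.
      replace (S (length L - S m)) with (length L - m) by lia.
      replace (length L - 1 - m) with (length L - S m) by lia. reflexivity. }
  rewrite H by lia. rewrite Nat.sub_diag. reflexivity.
Qed.
Global Opaque emap.

Definition efilter f l :=
  ER (elen l) EZ (elet (enth (lenm1m (lift 2 l)) (lift 2 l)) (eif (ren r3 f) (econs (EV 0) (EV 2)) (EV 2))).
Lemma den_efilter : forall f l env,
  den (efilter f l) env = encl (filter (fun y => n2b (den f (scons y env))) (decL (den l env))).
Proof.
  intros; unfold efilter; simpl. rewrite den_elen. set (L := decL (den l env)).
  set (F := fun y => n2b (den f (scons y env))).
  assert (forall m, m <= length L -> recf 0 (fun m0 acc => den (elet (enth (lenm1m (lift 2 l)) (lift 2 l)) (eif (ren r3 f) (econs (EV 0) (EV 2)) (EV 2)))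
      (scons m0 (scons acc env))) m = encl (filter F (skipn (length L - m) L))).
  { induction m; intros Hm; simpl.
    - rewrite skipn_all2 by lia. reflexivity.
    - rewrite IHm by lia. rewrite den_elet, den_eif, den_r3, den_enth. unfold lenm1m.
      rewrite !den_esub, den_elen, !den_lift2. simpl. fold L.
      rewrite (skipn_nth_cons L (length L - S m)) by lia.
      replace (S (length L - S m)) with (length L - m) by lia.
      replace (length L - 1 - m) with (length L - S m) by lia. simpl.
      unfold F. unfold n2b.
      destruct (den f (scons (nth (length L - S m) L 0) env) =? 0); simpl.
      + reflexivity.
      + rewrite den_econs. simpl. reflexivity. }
  rewrite H by lia. rewrite Nat.sub_diag. reflexivity.
Qed.
Global Opaque efilter.

Definition eapp a b := ER (elen a) b (econs (enth (lenm1m (lift 2 a)) (lift 2 a)) (EV 1)).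
Lemma den_eapp : forall a b env,
  den (eapp a b) env = encl (decL (den a env) ++ decL (den b env)).
Proof.
  intros; unfold eapp; simpl. rewrite den_elen. set (L := decL (den a env)).
  assert (forall m, m <= length L -> recf (den b env) (fun m0 acc => den (econs (enth (lenm1m (lift 2 a)) (lift 2 a)) (EV 1))
      (scons m0 (scons acc env))) m = encl (skipn (length L - m) L ++ decL (den b env))).
  { induction m; intros Hm; simpl.
    - rewrite skipn_all2 by lia. simpl. rewrite encl_decL. reflexivity.
    - rewrite IHm by lia. rewrite den_econs, den_enth. unfold lenm1m.
      rewrite !den_esub, den_elen, !den_lift2. simpl. fold L.
      rewrite (skipn_nth_cons L (length L - S m)) by lia.
      replace (S (length L - S m)) with (length L - m) by lia.
      replace (length L - 1 - m) with (length L - S m) by lia. reflexivity. }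
  rewrite H by lia. rewrite Nat.sub_diag. reflexivity.
Qed.
Global Opaque eapp.

Definition eflat ll := ER (elen ll) EZ (eapp (enth (lenm1m (lift 2 ll)) (lift 2 ll)) (EV 1)).
Lemma den_eflat : forall ll env,
  den (eflat ll) env = encl (concat (map decL (decL (den ll env)))).
Proof.
  intros; unfold eflat; simpl. rewrite den_elen. set (L := decL (den ll env)).
  assert (forall m, m <= length L -> recf 0 (fun m0 acc => den (eapp (enth (lenm1m (lift 2 ll)) (lift 2 ll)) (EV 1))
      (scons m0 (scons acc env))) m = encl (concat (map decL (skipn (length L - m) L)))).
  { induction m; intros Hm; simpl.
    - rewrite skipn_all2 by lia. reflexivity.
    - rewrite IHm by lia. rewrite den_eapp, den_enth. unfold lenm1m.
      rewrite !den_esub, den_elen, !den_lift2. simpl. fold L.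
      rewrite (skipn_nth_cons L (length L - S m)) by lia.
      replace (S (length L - S m)) with (length L - m) by lia.
      replace (length L - 1 - m) with (length L - S m) by lia. simpl.
      rewrite decL_encl. reflexivity. }
  rewrite H by lia. rewrite Nat.sub_diag. reflexivity.
Qed.
Global Opaque eflat.

Definition eseqr n := ER n EZ (econs (EV 0) (EV 1)).
Lemma den_eseqr : forall n env, den (eseqr n) env = encl (rev (seq 0 (den n env))).
Proof.
  intros; unfold eseqr; cbn [den]. induction (den n env); cbn [recf]; auto.
  rewrite den_econs. cbn [den scons]. rewrite IHn0. rewrite (seq_S n0 0), rev_app_distr. reflexivity.
Qed.
Global Opaque eseqr.

Definition epow a b := ER b (ES EZ) (emul (EV 1) (lift 2 a)).
Lemma den_epow : forall a b env, den (epow a b) env = den a env ^ den b env.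
Proof.
  intros; unfold epow; simpl. induction (den b env); simpl; auto.
  rewrite den_emul, den_lift2. simpl. rewrite IHn. lia.
Qed.
Global Opaque epow.

Definition mydiv (a d : nat) : nat := if d =? 0 then a else a / d.
Definition ediv a d := esum a (ele (emul (ES (EV 0)) (lift 1 d)) (lift 1 a)).
Lemma den_ediv : forall a d env, den (ediv a d) env = mydiv (den a env) (den d env).
Proof.
  intros; unfold ediv, mydiv. rewrite den_esum.
  destruct (Nat.eqb_spec (den d env) 0) as [Hd|Hd].
  - rewrite (bsum_ext _ (fun i => b2n (i <? den a env))). rewrite bsum_ind. lia.
    intros i Hi. rewrite den_ele, den_emul, !den_lift1. simpl. rewrite Hd.
    destruct (Nat.ltb_spec i (den a env)); [|lia]. rewrite Nat.mul_0_r. reflexivity.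
  - rewrite (bsum_ext _ (fun i => b2n (i <? den a env / den d env))).
    + rewrite bsum_ind. pose proof (Nat.div_le_upper_bound (den a env) (den d env) (den a env)). nia.
    + intros i _. rewrite den_ele, den_emul, !den_lift1. simpl.
      destruct (Nat.ltb_spec i (den a env / den d env));
      destruct (Nat.leb_spec (den d env + i * den d env) (den a env)); auto; exfalso.
      * assert (S i * den d env <= den d env * (den a env / den d env)) by nia.
        pose proof (Nat.mul_div_le (den a env) (den d env)). nia.
      * assert (S i <= den a env / den d env). apply Nat.div_le_lower_bound; lia. lia.
Qed.
Global Opaque ediv.

Definition emod a d := esub a (emul d (ediv a d)).
Lemma den_emod : forall a d env, den (emod a d) env = den a env mod den d env.
Proof.
  intros; unfold emod. rewrite den_esub, den_emul, den_ediv. unfold mydiv.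
  destruct (Nat.eqb_spec (den d env) 0) as [Hd|Hd]. rewrite Hd. simpl. lia.
  rewrite (Nat.div_mod_eq (den a env) (den d env)) at 1. lia.
Qed.
Global Opaque emod.

Definition cov_tbl (st : nat -> nat -> nat) (m : nat) : nat :=
  recf 0 (fun m t => S (cpair (st m t) t)) m.
Definition covF (st : nat -> nat -> nat) (c : nat) : nat := st c (cov_tbl st c).

Definition ecov step c := ehd (ER (ES c) EZ (econs step (EV 1))).
Lemma den_ecov : forall step c env,
  den (ecov step c) env = covF (fun m t => den step (scons m (scons t env))) (den c env).
Proof.
  intros; unfold ecov. rewrite den_ehd. simpl. rewrite den_econs. simpl.
  rewrite decL_cons. simpl. unfold covF, cov_tbl.
  rewrite (recf_ext 0 _ (fun m t => S (cpair (den step (scons m (scons t env))) t))).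
  reflexivity. intros. rewrite den_econs. reflexivity.
Qed.
Global Opaque ecov.

Lemma cov_lookup : forall st m j, j < m -> nth (m - 1 - j) (decL (cov_tbl st m)) 0 = covF st j.
Proof.
  induction m; intros j Hj. lia.
  change (cov_tbl st (S m)) with (S (cpair (st m (cov_tbl st m)) (cov_tbl st m))).
  rewrite decL_cons. destruct (Nat.eq_dec j m).
  - subst. replace (S m - 1 - m) with 0 by lia. reflexivity.
  - replace (S m - 1 - j) with (S (m - 1 - j)) by lia. simpl. apply IHm. lia.
Qed.

#[global] Instance existsb_pr {X} : Proper (pointwise_relation X eq ==> eq ==> eq) (@existsb X).
Proof. intros f g H l l' <-. rewrite (functional_extensionality f g H). reflexivity. Qed.
#[global] Instance forallb_pr {X} : Proper (pointwise_relation X eq ==> eq ==> eq) (@forallb X).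
Proof. intros f g H l l' <-. rewrite (functional_extensionality f g H). reflexivity. Qed.
#[global] Instance filter_pr {X} : Proper (pointwise_relation X eq ==> eq ==> eq) (@filter X).
Proof. intros f g H l l' <-. rewrite (functional_extensionality f g H). reflexivity. Qed.
#[global] Instance map_pr {X Y} : Proper (pointwise_relation X eq ==> eq ==> eq) (@map X Y).
Proof. intros f g H l l' <-. rewrite (functional_extensionality f g H). reflexivity. Qed.
#[global] Instance bex_pr : Proper (pointwise_relation nat eq ==> eq ==> eq) bex.
Proof. intros f g H l l' <-. rewrite (functional_extensionality f g H). reflexivity. Qed.
#[global] Instance ball_pr : Proper (pointwise_relation nat eq ==> eq ==> eq) ball.
Proof. intros f g H l l' <-. rewrite (functional_extensionality f g H). reflexivity. Qed.
#[global] Instance covF_pr : Proper (pointwise_relation nat (pointwise_relation nat eq) ==> eq ==> eq) covF.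
Proof.
  intros f g H l l' <-. assert (f = g).
  { apply functional_extensionality; intro; apply functional_extensionality; intro; apply H. }
  subst; reflexivity.
Qed.

Lemma den_liftS : forall k e x env, den (lift (S k) e) (scons x env) = den (lift k e) env.
Proof. intros. unfold lift. rewrite !den_ren. apply den_ext_all. reflexivity. Qed.
Lemma den_lift0 : forall e env, den (lift 0 e) env = den e env.
Proof. intros. unfold lift. rewrite den_ren. apply den_ext_all. reflexivity. Qed.
Lemma n2b_b2n : forall b, n2b (b2n b) = b.
Proof. destruct b; reflexivity. Qed.
Lemma b2n_eq0 : forall b, (b2n b =? 0) = negb b.
Proof. destruct b; reflexivity. Qed.
Lemma den_EV0 : forall x env, den (EV 0) (scons x env) = x. Proof. reflexivity. Qed.
Lemma den_EVS : forall i x env, den (EV (S i)) (scons x env) = den (EV i) env. Proof. reflexivity. Qed.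
Lemma den_ES : forall a env, den (ES a) env = S (den a env). Proof. reflexivity. Qed.
Lemma den_EZ : forall env, den EZ env = 0. Proof. reflexivity. Qed.

Global Opaque covF.
Hint Rewrite den_liftS den_lift0 den_EV0 den_EVS den_ES den_EZ den_eadd den_esub den_emul
  den_eif den_eisz den_eeq den_ele den_eand den_eor den_enot den_elet den_eex den_eall
  den_ecpair den_eunp1 den_eunp2 den_ehd den_econs den_enth den_elen den_emem den_eexl
  den_eallL den_emap den_efilter den_eapp den_eflat den_eseqr den_epow den_ediv den_emod
  den_ecov n2b_b2n b2n_eq0 decL_encl : dendb.
Ltac ds := repeat (rewrite_strat (topdown (hints dendb))).

Definition lookup (m tbl y : nat) : nat := nth (m - 1 - y) (decL tbl) 0.
Definition elookup (m tbl y : ex) : ex := enth (esub (esub m (ES EZ)) y) tbl.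
Lemma den_elookup : forall m tbl y env, den (elookup m tbl y) env = lookup (den m env) (den tbl env) (den y env).
Proof. intros. unfold elookup, lookup. ds. reflexivity. Qed.
Global Opaque elookup.
Hint Rewrite den_elookup : dendb.

Definition st_occ (f n m tbl : nat) : nat :=
  if negb (unp1 m =? 1) then 0 else
  b2n (((unp1 (unp2 m) =? f) && (length (decL (unp2 (unp2 m))) =? n)) ||
       existsb (fun y => n2b (lookup m tbl y)) (decL (unp2 (unp2 m)))).
Definition occT (f n c : nat) : nat := covF (st_occ f n) c.

Definition eoccT (f n c : ex) : ex :=
  ecov (eif (eeq (eunp1 (EV 0)) (ES EZ))
          (eor (eand (eeq (eunp1 (eunp2 (EV 0))) (lift 2 f)) (eeq (elen (eunp2 (eunp2 (EV 0)))) (lift 2 n)))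
               (eexl (eunp2 (eunp2 (EV 0))) (elookup (EV 1) (EV 2) (EV 0))))
          EZ) c.
Lemma den_eoccT : forall f n c env, den (eoccT f n c) env = occT (den f env) (den n env) (den c env).
Proof. intros. unfold eoccT, occT. ds. reflexivity. Qed.
Hint Rewrite den_eoccT : dendb.
Global Opaque eoccT.

Definition ratoms (r : nat) : list nat := decL (unp1 r) ++ map unp2 (decL (unp2 r)).
Definition eratoms (r : ex) : ex := eapp (eunp1 r) (emap (eunp2 (EV 0)) (eunp2 r)).
Lemma den_eratoms : forall r env, den (eratoms r) env = encl (ratoms (den r env)).
Proof. intros. unfold eratoms, ratoms. ds. reflexivity. Qed.
Global Opaque eratoms.
Hint Rewrite den_eratoms : dendb.

Definition occP (p f n : nat) : bool :=
  existsb (fun r => existsb (fun a => existsb (fun t => n2b (occT f n t)) (decL (unp2 a))) (ratoms r)) (decL p).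
Definition eoccP (p f n : ex) : ex :=
  eexl p (eexl (eratoms (EV 0)) (eexl (eunp2 (EV 0)) (eoccT (lift 3 f) (lift 3 n) (EV 0)))).
Lemma den_eoccP : forall p f n env, den (eoccP p f n) env = b2n (occP (den p env) (den f env) (den n env)).
Proof. intros. unfold eoccP, occP. ds. reflexivity. Qed.
Global Opaque eoccP.
Hint Rewrite den_eoccP : dendb.

Definition hasConst (p : nat) : bool := bex (fun f => occP p f 0) (S p).
Definition ehasConst (p : ex) : ex := eex (ES p) (eoccP (lift 1 p) (EV 0) EZ).
Lemma den_ehasConst : forall p env, den (ehasConst p) env = b2n (hasConst (den p env)).
Proof. intros. unfold ehasConst, hasConst. ds. reflexivity. Qed.
Global Opaque ehasConst.
Hint Rewrite den_ehasConst : dendb.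

Definition st_hu (p m tbl : nat) : nat :=
  if negb (unp1 m =? 1) then 0 else
  b2n ((occP p (unp1 (unp2 m)) (length (decL (unp2 (unp2 m)))) &&
        forallb (fun y => n2b (lookup m tbl y)) (decL (unp2 (unp2 m))))
       || ((unp2 m =? 0) && negb (hasConst p))).
Definition inHU (p c : nat) : nat := covF (st_hu p) c.
Definition einHU (p c : ex) : ex :=
  ecov (eif (eeq (eunp1 (EV 0)) (ES EZ))
          (eor (eand (eoccP (lift 2 p) (eunp1 (eunp2 (EV 0))) (elen (eunp2 (eunp2 (EV 0)))))
                     (eallL (eunp2 (eunp2 (EV 0))) (elookup (EV 1) (EV 2) (EV 0))))
               (eand (eeq (eunp2 (EV 0)) EZ) (enot (ehasConst (lift 2 p)))))
          EZ) c.
Lemma den_einHU : forall p c env, den (einHU p c) env = inHU (den p env) (den c env).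
Proof. intros. unfold einHU, inHU. ds. reflexivity. Qed.
Global Opaque einHU.
Hint Rewrite den_einHU : dendb.

Definition tau (i T nT x : nat) : nat := nth ((mydiv i (nT ^ x)) mod nT) (decL T) 0.
Definition st_sub (i T nT m tbl : nat) : nat :=
  if unp1 m =? 0 then tau i T nT (unp2 m)
  else cpair 1 (cpair (unp1 (unp2 m)) (encl (map (fun y => lookup m tbl y) (decL (unp2 (unp2 m)))))).
Definition substT (i T nT c : nat) : nat := covF (st_sub i T nT) c.
Definition esubT (i T nT c : ex) : ex :=
  ecov (eif (eunp1 (EV 0))
          (ecpair (ES EZ) (ecpair (eunp1 (eunp2 (EV 0))) (emap (elookup (EV 1) (EV 2) (EV 0)) (eunp2 (eunp2 (EV 0))))))
          (enth (emod (ediv (lift 2 i) (epow (lift 2 nT) (eunp2 (EV 0)))) (lift 2 nT)) (lift 2 T))) c.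
Lemma den_esubT : forall i T nT c env, den (esubT i T nT c) env = substT (den i env) (den T env) (den nT env) (den c env).
Proof. intros. unfold esubT, substT. ds. reflexivity. Qed.
Global Opaque esubT.
Hint Rewrite den_esubT : dendb.

Definition substA (i T nT a : nat) : nat := cpair (unp1 a) (encl (map (substT i T nT) (decL (unp2 a)))).
Definition esubA (i T nT a : ex) : ex :=
  ecpair (eunp1 a) (emap (esubT (lift 1 i) (lift 1 T) (lift 1 nT) (EV 0)) (eunp2 a)).
Lemma den_esubA : forall i T nT a env, den (esubA i T nT a) env = substA (den i env) (den T env) (den nT env) (den a env).
Proof. intros. unfold esubA, substA. ds. reflexivity. Qed.
Global Opaque esubA.
Hint Rewrite den_esubA : dendb.

Definition substL (i T nT l : nat) : nat := cpair (unp1 l) (substA i T nT (unp2 l)).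
Definition esubL (i T nT l : ex) : ex := ecpair (eunp1 l) (esubA i T nT (eunp2 l)).
Lemma den_esubL : forall i T nT l env, den (esubL i T nT l) env = substL (den i env) (den T env) (den nT env) (den l env).
Proof. intros. unfold esubL, substL. ds. reflexivity. Qed.
Global Opaque esubL.
Hint Rewrite den_esubL : dendb.

Definition substR (i T nT r : nat) : nat :=
  cpair (encl (map (substA i T nT) (decL (unp1 r)))) (encl (map (substL i T nT) (decL (unp2 r)))).
Definition esubR (i T nT r : ex) : ex :=
  ecpair (emap (esubA (lift 1 i) (lift 1 T) (lift 1 nT) (EV 0)) (eunp1 r))
         (emap (esubL (lift 1 i) (lift 1 T) (lift 1 nT) (EV 0)) (eunp2 r)).
Lemma den_esubR : forall i T nT r env, den (esubR i T nT r) env = substR (den i env) (den T env) (den nT env) (den r env).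
Proof. intros. unfold esubR, substR. ds. reflexivity. Qed.
Global Opaque esubR.
Hint Rewrite den_esubR : dendb.

Definition bit (j idx : nat) : bool := (mydiv j (2 ^ idx)) mod 2 =? 1.
Definition ebit (j idx : ex) : ex := eeq (emod (ediv j (epow (ES (ES EZ)) idx)) (ES (ES EZ))) (ES EZ).
Lemma den_ebit : forall j idx env, den (ebit j idx) env = b2n (bit (den j env) (den idx env)).
Proof. intros. unfold ebit, bit. ds. reflexivity. Qed.
Global Opaque ebit.
Hint Rewrite den_ebit : dendb.

Definition inM (A j a : nat) : bool :=
  bex (fun idx => (nth idx (decL A) 0 =? a) && bit j idx) (length (decL A)).
Definition einM (A j a : ex) : ex :=
  eex (elen A) (eand (eeq (enth (EV 0) (lift 1 A)) (lift 1 a)) (ebit (lift 1 j) (EV 0))).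
Lemma den_einM : forall A j a env, den (einM A j a) env = b2n (inM (den A env) (den j env) (den a env)).
Proof. intros. unfold einM, inM. ds. reflexivity. Qed.
Global Opaque einM.
Hint Rewrite den_einM : dendb.

Definition negs (g : nat) : list nat := map unp2 (filter (fun l => unp1 l =? 1) (decL (unp2 g))).
Definition poss (g : nat) : list nat := map unp2 (filter (fun l => unp1 l =? 0) (decL (unp2 g))).
Definition enegs (g : ex) : ex := emap (eunp2 (EV 0)) (efilter (eeq (eunp1 (EV 0)) (ES EZ)) (eunp2 g)).
Definition eposs (g : ex) : ex := emap (eunp2 (EV 0)) (efilter (eeq (eunp1 (EV 0)) EZ) (eunp2 g)).
Lemma den_enegs : forall g env, den (enegs g) env = encl (negs (den g env)).
Proof. intros. unfold enegs, negs. ds. reflexivity. Qed.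
Lemma den_eposs : forall g env, den (eposs g) env = encl (poss (den g env)).
Proof. intros. unfold eposs, poss. ds. reflexivity. Qed.
Global Opaque enegs eposs.
Hint Rewrite den_enegs den_eposs : dendb.

Definition sat (G A j j' : nat) : bool :=
  forallb (fun g => negb (forallb (fun b => negb (inM A j b)) (negs g)) ||
                    (negb (forallb (fun b => inM A j' b) (poss g)) ||
                     existsb (fun a => inM A j' a) (decL (unp1 g)))) (decL G).
Definition esat (G A j j' : ex) : ex :=
  eallL G (eor (enot (eallL (enegs (EV 0)) (enot (einM (lift 2 A) (lift 2 j) (EV 0)))))
               (eor (enot (eallL (eposs (EV 0)) (einM (lift 2 A) (lift 2 j') (EV 0))))
                    (eexl (eunp1 (EV 0)) (einM (lift 2 A) (lift 2 j') (EV 0))))).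
Lemma den_esat : forall G A j j' env, den (esat G A j j') env = b2n (sat (den G env) (den A env) (den j env) (den j' env)).
Proof. intros. unfold esat, sat. ds. reflexivity. Qed.
Global Opaque esat.
Hint Rewrite den_esat : dendb.

Definition subB (A j' j : nat) : bool :=
  forallb (fun a => negb (inM A j' a) || inM A j a) (decL A).
Definition esubB (A j' j : ex) : ex :=
  eallL A (eor (enot (einM (lift 1 A) (lift 1 j') (EV 0))) (einM (lift 1 A) (lift 1 j) (EV 0))).
Lemma den_esubB : forall A j' j env, den (esubB A j' j) env = b2n (subB (den A env) (den j' env) (den j env)).
Proof. intros. unfold esubB, subB. ds. reflexivity. Qed.
Global Opaque esubB.
Hint Rewrite den_esubB : dendb.

Definition stableB (G A j : nat) : bool :=
  sat G A j j && ball (fun j' => negb (subB A j' j) || (negb (sat G A j j') || subB A j j'))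
                      (2 ^ length (decL A)).
Definition estableB (G A j : ex) : ex :=
  eand (esat G A j j)
       (eall (epow (ES (ES EZ)) (elen A))
          (eor (enot (esubB (lift 1 A) (EV 0) (lift 1 j)))
               (eor (enot (esat (lift 1 G) (lift 1 A) (lift 1 j) (EV 0))) (esubB (lift 1 A) (lift 1 j) (EV 0))))).
Lemma den_estableB : forall G A j env, den (estableB G A j) env = b2n (stableB (den G env) (den A env) (den j env)).
Proof. intros. unfold estableB, stableB. ds. reflexivity. Qed.
Global Opaque estableB.
Hint Rewrite den_estableB : dendb.

Definition C1 (p G T nT B : nat) : bool :=
  forallb (fun g => existsb (fun r => bex (fun i => substR i T nT r =? g) B) (decL p)) (decL G).
Definition eC1 (p G T nT B : ex) : ex :=
  eallL G (eexl (lift 1 p) (eex (lift 2 B) (eeq (esubR (EV 0) (lift 3 T) (lift 3 nT) (EV 1)) (EV 2)))).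
Lemma den_eC1 : forall p G T nT B env, den (eC1 p G T nT B) env =
  b2n (C1 (den p env) (den G env) (den T env) (den nT env) (den B env)).
Proof. intros. unfold eC1, C1. ds. reflexivity. Qed.
Global Opaque eC1.
Hint Rewrite den_eC1 : dendb.

Definition C2 (p G T nT B A : nat) : bool :=
  forallb (fun r => ball (fun i =>
     negb (existsb (fun a => existsb (fun y => y =? a) (decL A)) (decL (unp1 (substR i T nT r))))
     || existsb (fun y => y =? substR i T nT r) (decL G)) B) (decL p).
Definition eC2 (p G T nT B A : ex) : ex :=
  eallL p (eall (lift 1 B) (eor (enot (eexl (eunp1 (esubR (EV 0) (lift 2 T) (lift 2 nT) (EV 1))) (emem (EV 0) (lift 3 A))))
                                (emem (esubR (EV 0) (lift 2 T) (lift 2 nT) (EV 1)) (lift 2 G)))).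
Lemma den_eC2 : forall p G T nT B A env, den (eC2 p G T nT B A) env =
  b2n (C2 (den p env) (den G env) (den T env) (den nT env) (den B env) (den A env)).
Proof. intros. unfold eC2, C2. ds. reflexivity. Qed.
Global Opaque eC2.
Hint Rewrite den_eC2 : dendb.

Definition C3 (k A : nat) : bool := forallb (fun a => forallb (fun t => t <=? k) (decL (unp2 a))) (decL A).
Definition eC3 (k A : ex) : ex := eallL A (eallL (eunp2 (EV 0)) (ele (EV 0) (lift 2 k))).
Lemma den_eC3 : forall k A env, den (eC3 k A) env = b2n (C3 (den k env) (den A env)).
Proof. intros. unfold eC3, C3. ds. reflexivity. Qed.
Global Opaque eC3.
Hint Rewrite den_eC3 : dendb.

Definition C4 (G A : nat) : bool := ball (fun j => negb (stableB G A j)) (2 ^ length (decL A)).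
Definition eC4 (G A : ex) : ex := eall (epow (ES (ES EZ)) (elen A)) (enot (estableB (lift 1 G) (lift 1 A) (EV 0))).
Lemma den_eC4 : forall G A env, den (eC4 G A) env = b2n (C4 (den G env) (den A env)).
Proof. intros. unfold eC4, C4. ds. reflexivity. Qed.
Global Opaque eC4.
Hint Rewrite den_eC4 : dendb.

Definition Acc (p w : nat) : bool :=
  let k := unp1 w in let G := unp2 w in
  let T := encl (filter (fun c => n2b (inHU p c)) (rev (seq 0 (S k)))) in
  let nT := length (decL T) in let B := nT ^ S p in
  let A := encl (concat (map ratoms (decL G))) in
  C1 p G T nT B && (C2 p G T nT B A && (C3 k A && ((p <=? k) && C4 G A))).

Definition eAcc : ex :=
  elet (eunp1 (EV 0))
  (elet (eunp2 (EV 1))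
  (elet (efilter (einHU (EV 4) (EV 0)) (eseqr (ES (EV 1))))
  (elet (elen (EV 0))
  (elet (epow (EV 0) (ES (EV 5)))
  (elet (eflat (emap (eratoms (EV 0)) (EV 3)))
   (eand (eC1 (EV 7) (EV 4) (EV 3) (EV 2) (EV 1))
   (eand (eC2 (EV 7) (EV 4) (EV 3) (EV 2) (EV 1) (EV 0))
   (eand (eC3 (EV 5) (EV 0))
   (eand (ele (EV 7) (EV 5)) (eC4 (EV 4) (EV 0))))))))))).

Lemma map_decL_encl : forall (f : nat -> list nat) l, map decL (map (fun y => encl (f y)) l) = map f l.
Proof. intros. rewrite map_map. apply map_ext. intros. apply decL_encl. Qed.

Lemma den_eAcc : forall w p env, den eAcc (scons w (scons p env)) = b2n (Acc p w).
Proof. intros. unfold eAcc, Acc. ds. rewrite map_decL_encl. reflexivity. Qed.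

Definition CHECK : ex := eif eAcc EZ (ES EZ).
Definition the_e : mu := MMin (compile CHECK).

Inductive nm : mu -> Prop :=
| nm_z : nm MZero | nm_s : nm MSucc | nm_p i : nm (MProj i)
| nm_c f gs : nm f -> Forall nm gs -> nm (MComp f gs)
| nm_r g h : nm g -> nm h -> nm (MRec g h).

Scheme eval_mind := Induction for eval Sort Prop
  with evalL_mind := Induction for evalL Sort Prop.

Lemma eval_det : forall e xs y, eval e xs y -> nm e -> forall y', eval e xs y' -> y = y'.
Proof.
  apply (eval_mind (fun e xs y _ => nm e -> forall y', eval e xs y' -> y = y')
                   (fun es xs ys _ => Forall nm es -> forall ys', evalL es xs ys' -> ys = ys')).
  - intros xs _ y' H. inversion H; auto.
  - intros xs _ y' H. inversion H; auto.
  - intros i xs _ y' H. inversion H; auto.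
  - intros f gs xs ys y HL IHL Hf IHf Hnm y' H. inversion Hnm; subst. inversion H; subst.
    assert (ys = ys0) by (apply IHL; auto). subst. apply IHf; auto.
  - intros g h xs y Hg IHg Hnm y' H. inversion Hnm; subst. inversion H; subst. apply IHg; auto.
  - intros g h n xs z y H1 IH1 H2 IH2 Hnm y' H. inversion Hnm; subst. inversion H; subst.
    assert (z = z0) by (apply IH1; auto). subst. apply IH2; auto.
  - intros f xs n _ _ _ Hnm. inversion Hnm.
  - intros xs _ ys' H. inversion H; auto.
  - intros g gs xs y ys Hg IHg HL IHL Hnm ys' H. inversion Hnm; subst. inversion H; subst.
    f_equal; [apply IHg|apply IHL]; auto.
Qed.

Lemma nm_compile : forall e, nm (compile e).
Proof.
  assert (HP : forall l, Forall nm (map MProj l)) by (induction l; simpl; repeat constructor; auto).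
  induction e; simpl; repeat constructor; auto.
Qed.

Lemma den_CHECK : forall w p, den CHECK (fun i => nth i [w; p] 0) = if Acc p w then 0 else 1.
Proof.
  intros. unfold CHECK. rewrite den_eif.
  rewrite (den_ext_all eAcc _ (scons w (scons p (fun _ => 0)))) by (intros [|[|[|i]]]; reflexivity).
  rewrite den_eAcc. destruct (Acc p w); reflexivity.
Qed.

Lemma halts_the_e : forall p, halts the_e p <-> exists w, Acc p w = true.
Proof.
  intros p. unfold halts, the_e. split.
  - intros [y Hy]. inversion Hy as [| | | | | |f xs n H3 H4]; subst.
    pose proof (compile_ok CHECK (y :: [p])) as H.
    exists y. rewrite den_CHECK in H.
    pose proof (eval_det _ _ _ H3 (nm_compile CHECK) _ H).
    destruct (Acc p y); auto. discriminate.
  - intros Hex.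
    assert (Hmin : exists w, Acc p w = true /\ forall m, m < w -> Acc p m = false).
    { destruct Hex as [w Hw]. induction w using (well_founded_induction lt_wf).
      destruct (bex (fun m => Acc p m) w) eqn:E.
      - apply bex_spec in E. destruct E as [m [Hm Hm']]. apply (H m Hm Hm').
      - exists w. split; auto. intros m Hm. destruct (Acc p m) eqn:E2; auto.
        assert (bex (fun m => Acc p m) w = true) by (apply bex_spec; eauto). congruence. }
    destruct Hmin as [w [Hw Hm]]. exists w. constructor.
    + pose proof (compile_ok CHECK (w :: [p])). rewrite den_CHECK, Hw in H. exact H.
    + intros m Hlt. pose proof (compile_ok CHECK (m :: [p])). rewrite den_CHECK, Hm in H by auto.
      eauto.
Qed.

Transparent covF.

Lemma term_ind' (Pt : term -> Prop) :
  (forall n, Pt (Var n)) -> (forall f ts, Forall Pt ts -> Pt (Fn f ts)) -> forall t, Pt t.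
Proof.
  intros HV HF. fix IH 1. intros t. destruct t as [n|f ts].
  - apply HV.
  - apply HF. induction ts as [|u ts IHts]; constructor. apply IH. apply IHts.
Qed.

Lemma enc_list_encl : forall (X : Type) (e : X -> nat) l, enc_list e l = encl (map e l).
Proof. intros; induction l; simpl; auto; rewrite IHl; reflexivity. Qed.

Lemma enc_term_Fn : forall f ts, enc_term (Fn f ts) = cpair 1 (cpair f (encl (map enc_term ts))).
Proof.
  intros. simpl. do 2 f_equal. induction ts; simpl; auto; rewrite IHts; reflexivity.
Qed.
Lemma enc_term_Var : forall n, enc_term (Var n) = cpair 0 n.
Proof. reflexivity. Qed.
Global Opaque enc_term.

Lemma sym_in_term_Fn : forall f n g ts,
  sym_in_term f n (Fn g ts) <-> (g = f /\ length ts = n) \/ exists u, In u ts /\ sym_in_term f n u.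
Proof.
  intros. simpl. apply or_iff_compat_l. induction ts; simpl. split; [tauto|]. intros [u [[] _]].
  rewrite IHts. split.
  - intros [H|[u [Hu H]]]; eauto.
  - intros [u [[->|Hu] H]]; eauto.
Qed.
Lemma sym_in_term_Var : forall f n x, ~ sym_in_term f n (Var x).
Proof. simpl; tauto. Qed.
Global Opaque sym_in_term.

Lemma enc_term_inj : forall t t', enc_term t = enc_term t' -> t = t'.
Proof.
  induction t using term_ind'; intros [m|g ts'] H';
  rewrite ?enc_term_Var, ?enc_term_Fn in H'; apply cpair_inj in H'; destruct H' as [H1 H2]; try discriminate.
  - congruence.
  - apply cpair_inj in H2. destruct H2 as [-> H2]. apply encl_inj in H2. f_equal.
    revert ts' H2. induction H; intros [|u ts'] H2; simpl in H2; try discriminate; auto.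
    injection H2; intros. f_equal; auto.
Qed.

Lemma map_inj : forall (X Y : Type) (f : X -> Y), (forall x y, f x = f y -> x = y) ->
  forall l l', map f l = map f l' -> l = l'.
Proof. induction l; intros [|b l'] H'; simpl in *; try discriminate; auto.
  injection H'; intros. f_equal; auto. Qed.

Lemma enc_atom_inj : forall a a', enc_atom a = enc_atom a' -> a = a'.
Proof.
  intros [p ts] [p' ts'] H. unfold enc_atom in H. simpl in H. apply cpair_inj in H.
  destruct H as [-> H]. rewrite !enc_list_encl in H. apply encl_inj in H.
  apply map_inj in H; [subst; auto| apply enc_term_inj].
Qed.
Lemma enc_literal_inj : forall l l', enc_literal l = enc_literal l' -> l = l'.
Proof.
  intros [a|a] [b|b] H; simpl in H; apply cpair_inj in H; destruct H as [H1 H2]; try discriminate;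
  apply enc_atom_inj in H2; subst; auto.
Qed.
Lemma enc_rule_inj : forall r r', enc_rule r = enc_rule r' -> r = r'.
Proof.
  intros [h b] [h' b'] H. unfold enc_rule in H. simpl in H. apply cpair_inj in H.
  destruct H as [H1 H2]. rewrite !enc_list_encl in H1, H2. apply encl_inj in H1, H2.
  apply map_inj in H1; [|apply enc_atom_inj]. apply map_inj in H2; [|apply enc_literal_inj]. subst; auto.
Qed.

Lemma enc_atom_eq : forall a, enc_atom a = cpair (pred a) (encl (map enc_term (args a))).
Proof. intros. unfold enc_atom. rewrite enc_list_encl. reflexivity. Qed.
Lemma enc_rule_eq : forall r, enc_rule r = cpair (encl (map enc_atom (head r))) (encl (map enc_literal (body r))).
Proof. intros. unfold enc_rule. rewrite !enc_list_encl. reflexivity. Qed.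
Lemma enc_program_eq : forall P, enc_program P = encl (map enc_rule P).
Proof. intros. unfold enc_program. rewrite enc_list_encl. reflexivity. Qed.
Lemma unp2_enc_literal : forall l, unp2 (enc_literal l) = enc_atom (lit_atom l).
Proof. intros [a|a]; simpl; apply unp2_cpair. Qed.
Lemma unp1_enc_literal : forall l, unp1 (enc_literal l) = match l with Pos _ => 0 | Neg _ => 1 end.
Proof. intros [a|a]; simpl; apply unp1_cpair. Qed.

Lemma ratoms_enc : forall r, ratoms (enc_rule r) = map enc_atom (rule_atoms r).
Proof.
  intros. unfold ratoms, rule_atoms. rewrite enc_rule_eq, unp1_cpair, unp2_cpair, !decL_encl.
  rewrite map_app, map_map, map_map. f_equal. apply map_ext. apply unp2_enc_literal.
Qed.

Lemma in_map_lt : forall (X : Type) (e : X -> nat) l x, In x l -> e x < encl (map e l).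
Proof. intros. apply elem_lt_encl. apply in_map; auto. Qed.

Lemma sym_bound : forall f n t, sym_in_term f n t -> f <= enc_term t /\ n <= enc_term t.
Proof.
  induction t using term_ind'; intros Hs. apply sym_in_term_Var in Hs; tauto.
  rewrite enc_term_Fn. apply sym_in_term_Fn in Hs.
  pose proof (cpair_ge1 f0 (encl (map enc_term ts))). pose proof (cpair_ge2 f0 (encl (map enc_term ts))).
  pose proof (cpair_ge2 1 (cpair f0 (encl (map enc_term ts)))).
  destruct Hs as [[-> <-]|[u [Hu Hs]]].
  - pose proof (length_le_encl (map enc_term ts)). rewrite length_map in H3. lia.
  - rewrite Forall_forall in H. destruct (H u Hu Hs). pose proof (in_map_lt _ enc_term ts u Hu). lia.
Qed.

Lemma atom_code_le_rule : forall r a, In a (rule_atoms r) -> enc_atom a < S (enc_rule r).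
Proof.
  intros r a H. rewrite enc_rule_eq. unfold rule_atoms in H. apply in_app_or in H. destruct H.
  - pose proof (in_map_lt _ enc_atom _ _ H). pose proof (cpair_ge1 (encl (map enc_atom (head r))) (encl (map enc_literal (body r)))). lia.
  - apply in_map_iff in H. destruct H as [l [<- Hl]].
    pose proof (in_map_lt _ enc_literal _ _ Hl).
    pose proof (cpair_ge2 (encl (map enc_atom (head r))) (encl (map enc_literal (body r)))).
    rewrite <- unp2_enc_literal. pose proof (unp2_le (enc_literal l)). lia.
Qed.

Lemma term_code_le_atom : forall a t, In t (args a) -> enc_term t < enc_atom a.
Proof.
  intros. rewrite enc_atom_eq. pose proof (in_map_lt _ enc_term _ _ H).
  pose proof (cpair_ge2 (pred a) (encl (map enc_term (args a)))). lia.
Qed.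

Lemma sym_prog_bound : forall P f n, sym_in_program P f n -> f <= enc_program P /\ n <= enc_program P.
Proof.
  intros P f n [r [a [Hr [Ha [t [Ht Hs]]]]]]. apply sym_bound in Hs.
  pose proof (term_code_le_atom a t Ht). pose proof (atom_code_le_rule r a Ha).
  pose proof (in_map_lt _ enc_rule P r Hr) as H3. rewrite <- enc_program_eq in H3. lia.
Qed.

Transparent covF.

Lemma code_Fn_parts : forall g ts, let c := enc_term (Fn g ts) in
  unp1 c = 1 /\ unp1 (unp2 c) = g /\ decL (unp2 (unp2 c)) = map enc_term ts /\ unp2 c <> 0 -> True.
Proof. auto. Qed.

Lemma Fn_unp : forall g ts,
  unp1 (enc_term (Fn g ts)) = 1 /\ unp1 (unp2 (enc_term (Fn g ts))) = g /\
  unp2 (unp2 (enc_term (Fn g ts))) = encl (map enc_term ts).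
Proof. intros. rewrite enc_term_Fn, !unp1_cpair, !unp2_cpair, unp1_cpair. auto. Qed.
Lemma Var_unp : forall x, unp1 (enc_term (Var x)) = 0 /\ unp2 (enc_term (Var x)) = x.
Proof. intros. rewrite enc_term_Var, unp1_cpair, unp2_cpair. auto. Qed.

Lemma child_lt : forall g ts y, In y (map enc_term ts) -> y < enc_term (Fn g ts).
Proof.
  intros. rewrite enc_term_Fn. apply elem_lt_encl in H.
  pose proof (cpair_ge2 g (encl (map enc_term ts))). pose proof (cpair_ge2 1 (cpair g (encl (map enc_term ts)))). lia.
Qed.

Lemma covF_lookup : forall st c y, y < c -> lookup c (cov_tbl st c) y = covF st y.
Proof. intros. unfold lookup. apply cov_lookup. auto. Qed.

Lemma occT_correct : forall f n t, n2b (occT f n (enc_term t)) = true <-> sym_in_term f n t.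
Proof.
  intros f n. induction t using term_ind'.
  - destruct (Var_unp n0) as [H1 H2]. unfold occT, covF, st_occ. rewrite H1. simpl.
    split; [discriminate|]. intro H. apply sym_in_term_Var in H. tauto.
  - destruct (Fn_unp f0 ts) as [H1 [H2 H3]]. unfold occT at 1. unfold covF at 1. unfold st_occ at 1.
    rewrite H1, H2, H3, decL_encl. simpl negb. cbv iota. rewrite n2b_b2n, sym_in_term_Fn, orb_true_iff, andb_true_iff.
    rewrite !Nat.eqb_eq, length_map, existsb_exists. apply or_iff_compat_l. split.
    + intros [y [Hy Hl]]. pose proof (child_lt f0 ts y Hy). apply in_map_iff in Hy. destruct Hy as [u [<- Hu]].
      exists u. split; auto. rewrite Forall_forall in H. apply H; auto.
      rewrite covF_lookup in Hl by auto. exact Hl.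
    + intros [u [Hu Hs]]. exists (enc_term u). split. apply in_map; auto.
      rewrite covF_lookup by (apply child_lt, in_map; auto). rewrite Forall_forall in H. apply H; auto.
Qed.

Lemma occP_correct : forall P f n, occP (enc_program P) f n = true <-> sym_in_program P f n.
Proof.
  intros. unfold occP, sym_in_program. rewrite enc_program_eq, decL_encl, existsb_exists. split.
  - intros [rc [Hrc H]]. apply in_map_iff in Hrc. destruct Hrc as [r [<- Hr]].
    rewrite ratoms_enc, existsb_exists in H. destruct H as [ac [Hac H]].
    apply in_map_iff in Hac. destruct Hac as [a [<- Ha]].
    rewrite enc_atom_eq, unp2_cpair, decL_encl, existsb_exists in H. destruct H as [tc [Htc H]].
    apply in_map_iff in Htc. destruct Htc as [t [<- Ht]].
    exists r, a. repeat split; auto. exists t. split; auto. apply occT_correct; auto.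
  - intros [r [a [Hr [Ha [t [Ht Hs]]]]]]. exists (enc_rule r). split. apply in_map; auto.
    rewrite ratoms_enc, existsb_exists. exists (enc_atom a). split. apply in_map; auto.
    rewrite enc_atom_eq, unp2_cpair, decL_encl, existsb_exists. exists (enc_term t).
    split. apply in_map; auto. apply occT_correct; auto.
Qed.

Lemma hasConst_correct : forall P, hasConst (enc_program P) = true <-> exists f, sym_in_program P f 0.
Proof.
  intros. unfold hasConst. rewrite bex_spec. split.
  - intros [f [_ H]]. exists f. apply occP_correct; auto.
  - intros [f H]. exists f. split. pose proof (sym_prog_bound _ _ _ H). lia. apply occP_correct; auto.
Qed.

Lemma cpair00 : cpair 0 0 = 0. Proof. reflexivity. Qed.

Lemma inHU_complete : forall P t, in_HU P t -> n2b (inHU (enc_program P) (enc_term t)) = true.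
Proof.
  intros P. induction t using term_ind'; intros Hhu; inversion Hhu as [f' ts' Hsym Hall| Hnc]; subst.
  - destruct (Fn_unp f ts) as [E1 [E2 E3]]. unfold inHU at 1, covF at 1, st_hu at 1.
    rewrite E1, E2, E3, decL_encl. simpl negb. cbv iota. rewrite n2b_b2n, orb_true_iff. left.
    rewrite andb_true_iff, length_map, forallb_forall. split. apply occP_correct; auto.
    intros y Hy. rewrite covF_lookup by (apply child_lt; auto).
    apply in_map_iff in Hy. destruct Hy as [u [<- Hu]]. rewrite Forall_forall in H, Hall.
    apply H; auto.
  - unfold inHU at 1, covF at 1, st_hu at 1. rewrite enc_term_Fn. simpl map. simpl encl.
    rewrite cpair00, unp1_cpair, unp2_cpair. simpl negb. cbv iota. rewrite n2b_b2n, orb_true_iff. right.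
    rewrite andb_true_iff. split; auto. apply negb_true_iff.
    destruct (hasConst (enc_program P)) eqn:E; auto. apply hasConst_correct in E.
    destruct E as [f Hf]. exfalso. eapply Hnc; eauto.
Qed.

Lemma list_choice : forall (Q : nat -> term -> Prop) (L : list nat),
  (forall y, In y L -> exists t, Q y t) -> exists ts, Forall2 (fun t y => Q y t) ts L.
Proof.
  induction L; intros H. exists []. constructor.
  destruct (H a (or_introl eq_refl)) as [t Ht]. destruct IHL as [ts Hts]. intros; apply H; right; auto.
  exists (t :: ts). constructor; auto.
Qed.

Lemma inHU_sound : forall P c, n2b (inHU (enc_program P) c) = true ->
  exists t, enc_term t = c /\ in_HU P t.
Proof.
  intros P c. induction c as [c IH] using (well_founded_induction lt_wf). intros Hc.
  unfold inHU at 1, covF at 1, st_hu at 1 in Hc.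
  destruct (Nat.eqb_spec (unp1 c) 1) as [E1|E1]; [|simpl in Hc; discriminate].
  simpl negb in Hc. cbv iota in Hc. rewrite n2b_b2n, orb_true_iff, !andb_true_iff in Hc.
  destruct Hc as [[Hocc Hall]|[Hz Hnc]].
  - set (L := decL (unp2 (unp2 c))) in *.
    assert (Hlt : forall y, In y L -> y < c).
    { intros y Hy. apply elem_lt_code in Hy. pose proof (unp2_le c). pose proof (unp2_le (unp2 c)). lia. }
    destruct (list_choice (fun y t => enc_term t = y /\ in_HU P t) L) as [ts Hts].
    { intros y Hy. apply IH; auto. rewrite forallb_forall in Hall. specialize (Hall y Hy).
      rewrite covF_lookup in Hall by auto. exact Hall. }
    assert (Hmap : map enc_term ts = L).
    { clear -Hts. induction Hts; simpl; auto. destruct H; subst; f_equal; auto. }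
    exists (Fn (unp1 (unp2 c)) ts). split.
    + rewrite enc_term_Fn, Hmap. unfold L. rewrite encl_decL, cpair_unp, <- E1, cpair_unp. reflexivity.
    + constructor.
      * apply occP_correct. replace (length ts) with (length L); auto. rewrite <- Hmap, length_map; auto.
      * clear -Hts. induction Hts; constructor; auto. apply H.
  - apply Nat.eqb_eq in Hz. apply negb_true_iff in Hnc. exists (Fn 0 []). split.
    + rewrite enc_term_Fn. rewrite <- (cpair_unp c), E1, Hz. reflexivity.
    + apply hu_default. intros f Hf. assert (hasConst (enc_program P) = true) by (apply hasConst_correct; eauto).
      congruence.
Qed.

Lemma substT_correct : forall i T nT (s : nat -> term),
  (forall x, enc_term (s x) = tau i T nT x) ->
  forall t, substT i T nT (enc_term t) = enc_term (subst_term s t).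
Proof.
  intros i T nT s Hs. induction t using term_ind'.
  - destruct (Var_unp n) as [H1 H2]. unfold substT, covF, st_sub. rewrite H1, H2. simpl. auto.
  - destruct (Fn_unp f ts) as [H1 [H2 H3]]. unfold substT at 1, covF at 1, st_sub at 1.
    set (c := enc_term (Fn f ts)) in *.
    rewrite H1, H2, H3, decL_encl. simpl subst_term. cbv iota. simpl Nat.eqb. cbv iota.
    rewrite (enc_term_Fn f (map (subst_term s) ts)). f_equal. f_equal. f_equal. rewrite !map_map. apply map_ext_in. intros u Hu.
    unfold c. rewrite covF_lookup by (apply child_lt, in_map; auto). rewrite Forall_forall in H. apply H; auto.
Qed.

Lemma substR_correct : forall i T nT (s : nat -> term),
  (forall x, enc_term (s x) = tau i T nT x) ->
  forall r, substR i T nT (enc_rule r) = enc_rule (subst_rule s r).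
Proof.
  intros. assert (HA : forall a, substA i T nT (enc_atom a) = enc_atom (subst_atom s a)).
  { intros. unfold substA. rewrite !enc_atom_eq, unp1_cpair, unp2_cpair, decL_encl. simpl.
    f_equal. f_equal. rewrite !map_map. apply map_ext. apply substT_correct; auto. }
  unfold substR. rewrite !enc_rule_eq, unp1_cpair, unp2_cpair, !decL_encl. simpl.
  f_equal; f_equal; rewrite !map_map; apply map_ext; auto.
  intros [a|a]; unfold substL; simpl; rewrite unp1_cpair, unp2_cpair, HA; reflexivity.
Qed.

Lemma digits_surj : forall b n (d : nat -> nat), 0 < b -> (forall x, x < n -> d x < b) ->
  exists j, j < b ^ n /\ forall x, x < n -> (j / b ^ x) mod b = d x.
Proof.
  intros b n d Hb. induction n; intros Hd.
  - exists 0. split. simpl; lia. intros; lia.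
  - destruct IHn as [j [Hj Hdig]]. intros; apply Hd; lia.
    assert (Hdn : d n < b) by (apply Hd; lia).
    exists (j + d n * b ^ n). split.
    + rewrite Nat.pow_succ_r'. nia.
    + intros x Hx. assert (Hbx : b ^ x <> 0) by (apply Nat.pow_nonzero; lia).
      destruct (Nat.eq_dec x n).
      * subst. rewrite Nat.div_add by auto. rewrite Nat.div_small by auto. simpl.
        apply Nat.mod_small; auto.
      * assert (Hx' : x < n) by lia.
        replace (d n * b ^ n) with ((d n * b ^ (n - S x)) * b * b ^ x).
        2:{ assert (E : b ^ n = b ^ (S (n - S x) + x)) by (f_equal; lia).
            rewrite E, Nat.pow_add_r, Nat.pow_succ_r'. lia. }
        rewrite Nat.div_add by auto. rewrite Nat.mod_add by lia. apply Hdig; auto.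
Qed.

Lemma mydiv_pos : forall a d, 0 < d -> mydiv a d = a / d.
Proof. intros. unfold mydiv. destruct (Nat.eqb_spec d 0); auto; lia. Qed.

Lemma tau_in : forall i T nT x, nT = length (decL T) -> 0 < nT -> In (tau i T nT x) (decL T).
Proof.
  intros. unfold tau. apply nth_In. rewrite <- H. apply Nat.mod_upper_bound. lia.
Qed.

Lemma tau_surj : forall T nT p (v : nat -> nat), nT = length (decL T) -> 0 < nT ->
  (forall x, x <= p -> In (v x) (decL T)) ->
  exists i, i < nT ^ S p /\ forall x, x <= p -> tau i T nT x = v x.
Proof.
  intros T nT p v HnT Hpos Hv.
  assert (Hidx : forall x, exists k, x <= p -> k < nT /\ nth k (decL T) 0 = v x).
  { intros x. destruct (le_lt_dec x p).
    - destruct (In_nth _ _ 0 (Hv x l)) as [k [Hk Hn]]. exists k. intros; subst; auto.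
    - exists 0. intros; lia. }
  destruct (choice _ Hidx) as [d Hd].
  destruct (digits_surj nT (S p) d Hpos) as [i [Hi Hdig]].
  { intros x Hx. apply Hd; lia. }
  exists i. split; auto. intros x Hx. unfold tau. rewrite mydiv_pos by (apply Nat.neq_0_lt_0, Nat.pow_nonzero; lia).
  rewrite Hdig by lia. apply Hd; auto.
Qed.

Lemma bits_surj : forall (Al : list nat) (Q : nat -> Prop),
  exists j, j < 2 ^ length Al /\ forall a, inM (encl Al) j a = true <-> In a Al /\ Q a.
Proof.
  intros Al Q.
  set (d := fun idx => if excluded_middle_informative (Q (nth idx Al 0)) then 1 else 0).
  destruct (digits_surj 2 (length Al) d) as [j [Hj Hdig]]. lia.
  { intros x _. unfold d. destruct (excluded_middle_informative _); lia. }
  exists j. split; auto. intros a. unfold inM. rewrite decL_encl, bex_spec. split.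
  - intros [idx [Hidx H]]. apply andb_true_iff in H. destruct H as [H1 H2]. apply Nat.eqb_eq in H1.
    unfold bit in H2. rewrite mydiv_pos in H2 by (apply Nat.neq_0_lt_0, Nat.pow_nonzero; lia).
    rewrite Hdig in H2 by auto. unfold d in H2. destruct (excluded_middle_informative _); [|discriminate].
    subst. split; auto. apply nth_In; auto.
  - intros [Ha HQ]. destruct (In_nth _ _ 0 Ha) as [idx [Hidx Hn]]. exists idx. split; auto.
    apply andb_true_iff. split. apply Nat.eqb_eq; auto.
    unfold bit. rewrite mydiv_pos by (apply Nat.neq_0_lt_0, Nat.pow_nonzero; lia).
    rewrite Hdig by auto. unfold d. destruct (excluded_middle_informative _); auto. subst; contradiction.
Qed.

Lemma inM_in : forall A j a, inM A j a = true -> In a (decL A).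
Proof.
  intros. unfold inM in H. apply bex_spec in H. destruct H as [idx [Hidx H]].
  apply andb_true_iff in H. destruct H as [H _]. apply Nat.eqb_eq in H. subst. apply nth_In; auto.
Qed.

Definition modelR (R : rule -> Prop) (M N : atom -> Prop) : Prop :=
  forall g, R g -> (forall B, In B (neg_body g) -> ~ M B) -> (forall B, In B (pos_body g) -> N B) ->
    exists A, In A (head g) /\ N A.
Definition stableR (R : rule -> Prop) (D M : atom -> Prop) : Prop :=
  (forall a, M a -> D a) /\ modelR R M M /\
  (forall N, (forall a, N a -> M a) -> modelR R M N -> forall a, M a -> N a).

Lemma pos_body_map_Pos : forall l, pos_body (Rule [] (map Pos l)) = l.
Proof. induction l; simpl; auto. unfold pos_body in *. simpl in *. f_equal; auto. Qed.

Lemma reduct_equiv : forall P M N, model_of_reduct P M N <-> modelR (ground_rule P) M N.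
Proof.
  intros. unfold model_of_reduct, modelR. split.
  - intros H g Hg Hneg Hpos. apply (H (Rule (head g) (map Pos (pos_body g)))).
    + exists g. repeat split; auto.
    + intros B HB. apply Hpos. rewrite <- (pos_body_map_Pos (pos_body g)).
      unfold pos_body in HB |- *. simpl in *. exact HB.
  - intros H g [g0 [Hg0 [Hneg ->]]] Hpos. apply (H g0); auto. intros B HB. apply Hpos.
    rewrite <- (pos_body_map_Pos (pos_body g0)) in HB. unfold pos_body in HB |- *. simpl in *. exact HB.
Qed.

Lemma stable_equiv : forall P M, stable_model P M <-> stableR (ground_rule P) (ground_atom P) M.
Proof.
  intros. unfold stable_model, stableR, herbrand_interp. rewrite reduct_equiv. split.
  - intros [H1 [H2 H3]]. repeat split; auto. intros N HN HmN. apply H3.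
    + intros a Na. apply H1, HN; auto.
    + auto.
    + apply reduct_equiv; auto.
  - intros [H1 [H2 H3]]. repeat split; auto. intros N _ HN HmN. apply H3; auto.
    apply reduct_equiv; auto.
Qed.

Lemma in_head_atoms : forall g a, In a (head g) -> In a (rule_atoms g).
Proof. intros. unfold rule_atoms. apply in_or_app; auto. Qed.
Lemma in_pos_atoms : forall g a, In a (pos_body g) -> In a (rule_atoms g).
Proof.
  intros g a H. unfold rule_atoms. apply in_or_app; right. unfold pos_body in H.
  apply in_flat_map in H. destruct H as [[b|b] [Hl Hb]]; simpl in Hb; [|tauto].
  destruct Hb as [->|[]]. apply in_map_iff. exists (Pos a); auto.
Qed.
Lemma in_neg_atoms : forall g a, In a (neg_body g) -> In a (rule_atoms g).
Proof.
  intros g a H. unfold rule_atoms. apply in_or_app; right. unfold neg_body in H.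
  apply in_flat_map in H. destruct H as [[b|b] [Hl Hb]]; simpl in Hb; [tauto|].
  destruct Hb as [->|[]]. apply in_map_iff. exists (Neg a); auto.
Qed.

Definition restrictR (R : rule -> Prop) (U : atom -> Prop) : rule -> Prop :=
  fun g => R g /\ exists a, In a (head g) /\ U a.
Definition closedR (R : rule -> Prop) (U : atom -> Prop) : Prop :=
  forall g, R g -> (exists a, In a (head g) /\ U a) -> forall b, In b (rule_atoms g) -> U b.

Lemma split_stable : forall R D M U, stableR R D M -> closedR R U ->
  stableR (restrictR R U) (fun a => D a /\ U a) (fun a => M a /\ U a).
Proof.
  intros R D M U [HD [Hmod Hmin]] Hcl. split; [|split].
  - intros x [Ma Ua]; auto.
  - intros g [Rg Hh] Hneg Hpos.
    destruct (Hmod g Rg) as [a [Ha Ma]].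
    + intros B HB MB. apply (Hneg B HB). split; auto. apply (Hcl g Rg Hh). apply in_neg_atoms; auto.
    + intros B HB. apply Hpos; auto.
    + exists a. split; auto. split; auto. apply (Hcl g Rg Hh). apply in_head_atoms; auto.
  - intros N HNM HN a [Ma Ua].
    set (N' := fun a => N a \/ (M a /\ ~ U a)).
    assert (HN' : modelR R M N').
    { intros g Rg Hneg Hpos.
      destruct (classic (exists a, In a (head g) /\ U a)) as [Hh|Hh].
      - destruct (HN g (conj Rg Hh)) as [b [Hb Nb]].
        + intros B HB [MB UB]. apply (Hneg B HB MB).
        + intros B HB. destruct (Hpos B HB) as [NB|[_ nUB]]; auto.
          exfalso. apply nUB. apply (Hcl g Rg Hh). apply in_pos_atoms; auto.
        + exists b. split; auto. left; auto.
      - destruct (Hmod g Rg Hneg) as [b [Hb Mb]].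
        + intros B HB. destruct (Hpos B HB) as [NB|[MB _]]; auto. apply HNM; auto.
        + exists b. split; auto. right. split; auto. intro Ub. apply Hh; eauto. }
    assert (N' a) by (apply (Hmin N'); auto; intros b [Nb|[Mb _]]; auto; apply HNM; auto).
    destruct H as [Na|[_ nU]]; auto. contradiction.
Qed.

Definition atomsG (G : list rule) : list atom := concat (map rule_atoms G).

Lemma A_code : forall G, concat (map ratoms (decL (encl (map enc_rule G)))) = map enc_atom (atomsG G).
Proof.
  intros. rewrite decL_encl. unfold atomsG. induction G; simpl; auto.
  rewrite ratoms_enc, IHG, map_app. reflexivity.
Qed.

Lemma negs_enc : forall g, negs (enc_rule g) = map enc_atom (neg_body g).
Proof.
  intros. unfold negs, neg_body. rewrite enc_rule_eq, unp2_cpair, decL_encl.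
  induction (body g) as [|[a|a] l IH]; simpl; auto.
  - rewrite unp1_cpair. simpl. auto.
  - rewrite unp1_cpair. simpl. rewrite unp2_cpair. f_equal; auto.
Qed.
Lemma poss_enc : forall g, poss (enc_rule g) = map enc_atom (pos_body g).
Proof.
  intros. unfold poss, pos_body. rewrite enc_rule_eq, unp2_cpair, decL_encl.
  induction (body g) as [|[a|a] l IH]; simpl; auto.
  - rewrite unp1_cpair. simpl. rewrite unp2_cpair. f_equal; auto.
  - rewrite unp1_cpair. simpl. auto.
Qed.
Lemma head_enc : forall g, decL (unp1 (enc_rule g)) = map enc_atom (head g).
Proof. intros. rewrite enc_rule_eq, unp1_cpair, decL_encl. reflexivity. Qed.

Definition Mset (A j : nat) : atom -> Prop := fun a => inM A j (enc_atom a) = true.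

Lemma sat_correct : forall G A j j',
  sat (encl (map enc_rule G)) A j j' = true <-> modelR (fun g => In g G) (Mset A j) (Mset A j').
Proof.
  intros. unfold sat, modelR, Mset. rewrite decL_encl, forallb_forall. split.
  - intros H g Hg Hneg Hpos. specialize (H (enc_rule g) (in_map _ _ _ Hg)).
    rewrite negs_enc, poss_enc, head_enc, !orb_true_iff in H.
    destruct H as [H|[H|H]].
    + exfalso. apply negb_true_iff in H. rewrite <- not_true_iff_false in H. apply H.
      apply forallb_forall. intros c Hc. apply in_map_iff in Hc. destruct Hc as [b [<- Hb]].
      apply negb_true_iff. apply not_true_iff_false. apply Hneg; auto.
    + exfalso. apply negb_true_iff in H. rewrite <- not_true_iff_false in H. apply H.
      apply forallb_forall. intros c Hc. apply in_map_iff in Hc. destruct Hc as [b [<- Hb]]. auto.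
    + apply existsb_exists in H. destruct H as [c [Hc Hm]]. apply in_map_iff in Hc.
      destruct Hc as [a [<- Ha]]. eauto.
  - intros H c Hc. apply in_map_iff in Hc. destruct Hc as [g [<- Hg]].
    rewrite negs_enc, poss_enc, head_enc, !orb_true_iff.
    destruct (forallb (fun b => negb (inM A j b)) (map enc_atom (neg_body g))) eqn:E1; [|left; auto].
    destruct (forallb (fun b => inM A j' b) (map enc_atom (pos_body g))) eqn:E2; [|right; left; auto].
    right; right. rewrite forallb_forall in E1, E2.
    destruct (H g Hg) as [a [Ha Hm]].
    + intros B HB HM. specialize (E1 (enc_atom B) (in_map _ _ _ HB)). rewrite HM in E1. discriminate.
    + intros B HB. apply E2. apply in_map; auto.
    + apply existsb_exists. exists (enc_atom a). split; auto. apply in_map; auto.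
Qed.

Lemma Mset_sub : forall G a j, Mset (encl (map enc_atom (atomsG G))) j a -> In a (atomsG G).
Proof.
  intros. apply inM_in in H. rewrite decL_encl in H. apply in_map_iff in H.
  destruct H as [b [Hb Hin]]. apply enc_atom_inj in Hb. subst; auto.
Qed.

Lemma subB_correct : forall G j' j,
  subB (encl (map enc_atom (atomsG G))) j' j = true <->
  (forall a, Mset (encl (map enc_atom (atomsG G))) j' a -> Mset (encl (map enc_atom (atomsG G))) j a).
Proof.
  intros. unfold subB, Mset. rewrite decL_encl, forallb_forall. split.
  - intros H a Ha. specialize (H (enc_atom a)). rewrite Ha in H. simpl in H. apply H.
    apply in_map. apply (Mset_sub G a j'). exact Ha.
  - intros H c Hc. apply in_map_iff in Hc. destruct Hc as [a [<- Ha]].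
    destruct (inM _ j' (enc_atom a)) eqn:E; simpl; auto.
Qed.

Lemma stableB_sound : forall G j,
  stableB (encl (map enc_rule G)) (encl (map enc_atom (atomsG G))) j = true ->
  stableR (fun g => In g G) (fun a => In a (atomsG G)) (Mset (encl (map enc_atom (atomsG G))) j).
Proof.
  intros G j H. set (A := encl (map enc_atom (atomsG G))) in *.
  unfold stableB in H. apply andb_true_iff in H. destruct H as [H1 H2]. split; [|split].
  - intros a Ha. apply (Mset_sub G a j). exact Ha.
  - apply sat_correct; auto.
  - intros N HNM HN a Ma.
    destruct (bits_surj (map enc_atom (atomsG G)) (fun c => exists b, enc_atom b = c /\ N b)) as [j' [Hj' Hbits]].
    assert (Eq : forall b, Mset A j' b <-> N b).
    { intros b. unfold Mset, A. rewrite Hbits. split.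
      - intros [_ [b' [Hb' Nb']]]. apply enc_atom_inj in Hb'. subst; auto.
      - intros Nb. split. apply in_map. apply (Mset_sub G b j). apply HNM; auto. eauto. }
    rewrite ball_spec in H2. specialize (H2 j').
    assert (Hj'' : j' < 2 ^ length (decL A)) by (unfold A; rewrite decL_encl; exact Hj').
    specialize (H2 Hj'').
    rewrite !orb_true_iff, !negb_true_iff in H2. destruct H2 as [H2|[H2|H2]].
    + exfalso. rewrite <- not_true_iff_false in H2. apply H2. apply subB_correct.
      intros b Hb. apply HNM, Eq; auto.
    + exfalso. rewrite <- not_true_iff_false in H2. apply H2. apply sat_correct.
      intros g Hg Hneg Hpos. destruct (HN g Hg Hneg) as [b [Hb Nb]].
      * intros B HB. apply Eq; auto.
      * exists b. split; auto. apply Eq; auto.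
    + apply Eq. apply (proj1 (subB_correct G j j') H2). exact Ma.
Qed.

Lemma stableB_complete : forall G M,
  stableR (fun g => In g G) (fun a => In a (atomsG G)) M ->
  exists j, j < 2 ^ length (atomsG G) /\
    stableB (encl (map enc_rule G)) (encl (map enc_atom (atomsG G))) j = true.
Proof.
  intros G M [HD [Hmod Hmin]]. set (A := encl (map enc_atom (atomsG G))).
  assert (Hset : forall Q : atom -> Prop, (forall a, Q a -> In a (atomsG G)) ->
     exists j, j < 2 ^ length (atomsG G) /\ forall b, Mset A j b <-> Q b).
  { intros Q HQ.
    destruct (bits_surj (map enc_atom (atomsG G)) (fun c => exists b, enc_atom b = c /\ Q b)) as [j [Hj Hbits]].
    exists j. rewrite length_map in Hj. split; auto. intros b. unfold Mset, A. rewrite Hbits. split.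
    - intros [_ [b' [Hb' Qb']]]. apply enc_atom_inj in Hb'. subst; auto.
    - intros Qb. split. apply in_map; auto. eauto. }
  destruct (Hset M HD) as [j [Hj Eq]]. exists j. split; auto.
  unfold stableB. apply andb_true_iff. split.
  - apply sat_correct. intros g Hg Hneg Hpos. destruct (Hmod g Hg) as [b [Hb Mb]].
    + intros B HB MB. apply (Hneg B HB). apply Eq; auto.
    + intros B HB. apply Eq; auto.
    + exists b. split; auto. apply Eq; auto.
  - apply ball_spec. intros j' Hj'. rewrite !orb_true_iff. unfold A in *.
    destruct (subB _ j' j) eqn:E1; [|left; auto].
    destruct (sat (encl (map enc_rule G)) _ j j') eqn:E2; [|right; left; auto].
    right; right. simpl. apply subB_correct. pose proof (proj1 (subB_correct G j' j) E1) as E1'. pose proof (proj1 (sat_correct G _ j j') E2) as E2'.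
    intros a Ma. apply (Hmin (Mset _ j')); auto.
    + intros b Hb. apply Eq. apply E1'; auto.
    + intros g Hg Hneg Hpos. apply E2'; auto. intros B HB HM. apply (Hneg B HB). apply Eq; auto.
    + apply Eq; auto.
Qed.

Inductive vin (x : nat) : term -> Prop :=
| vin_var : vin x (Var x)
| vin_fn f ts u : In u ts -> vin x u -> vin x (Fn f ts).

Definition vin_atom (x : nat) (a : atom) : Prop := exists t, In t (args a) /\ vin x t.
Definition vin_rule (x : nat) (r : rule) : Prop := exists a, In a (rule_atoms r) /\ vin_atom x a.

Lemma subst_term_agree : forall s s' t, (forall x, vin x t -> s x = s' x) -> subst_term s t = subst_term s' t.
Proof.
  intros s s'. induction t using term_ind'; intros Hag; simpl.
  - apply Hag. constructor.
  - f_equal. apply map_ext_in. intros u Hu. rewrite Forall_forall in H. apply H; auto.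
    intros x Hx. apply Hag. econstructor; eauto.
Qed.
Lemma subst_atom_agree : forall s s' a, (forall x, vin_atom x a -> s x = s' x) -> subst_atom s a = subst_atom s' a.
Proof.
  intros. unfold subst_atom. f_equal. apply map_ext_in. intros t Ht. apply subst_term_agree.
  intros; apply H; exists t; auto.
Qed.
Lemma subst_rule_agree : forall s s' r, (forall x, vin_rule x r -> s x = s' x) -> subst_rule s r = subst_rule s' r.
Proof.
  intros. unfold subst_rule. f_equal.
  - apply map_ext_in. intros a Ha. apply subst_atom_agree. intros x Hx. apply H. exists a. split; auto.
    apply in_head_atoms; auto.
  - apply map_ext_in. intros l Hl. destruct l as [a|a]; simpl; f_equal; apply subst_atom_agree;
    intros x Hx; apply H; exists a; split; auto; unfold rule_atoms; apply in_or_app; right;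
    apply in_map_iff; [exists (Pos a)|exists (Neg a)]; auto.
Qed.

Lemma rule_atoms_subst : forall s r, rule_atoms (subst_rule s r) = map (subst_atom s) (rule_atoms r).
Proof.
  intros. unfold rule_atoms, subst_rule. simpl. rewrite map_app. f_equal.
  rewrite !map_map. apply map_ext. intros [a|a]; reflexivity.
Qed.

Lemma vin_code : forall s x t, vin x t -> enc_term (s x) <= enc_term (subst_term s t).
Proof.
  intros s x t H. induction H; simpl. lia.
  pose proof (child_lt f (map (subst_term s) ts) (enc_term (subst_term s u))).
  rewrite map_map in H1. assert (In (enc_term (subst_term s u)) (map (fun x => enc_term (subst_term s x)) ts)).
  { apply in_map_iff. eauto. } specialize (H1 H2). lia.
Qed.

Lemma vin_bound : forall x t, vin x t -> x <= enc_term t.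
Proof.
  intros x t H. induction H. rewrite enc_term_Var. apply cpair_ge2.
  pose proof (child_lt f ts (enc_term u) (in_map _ _ _ H)). lia.
Qed.

Lemma vin_rule_bound : forall P r x, In r P -> vin_rule x r -> x <= enc_program P.
Proof.
  intros P r x Hr [a [Ha [t [Ht Hv]]]]. apply vin_bound in Hv.
  pose proof (term_code_le_atom a t Ht). pose proof (atom_code_le_rule r a Ha).
  pose proof (in_map_lt _ enc_rule P r Hr) as H3. rewrite <- enc_program_eq in H3. lia.
Qed.

Lemma sym_subterm : forall f n g ts u, In u ts -> sym_in_term f n u -> sym_in_term f n (Fn g ts).
Proof. intros. apply sym_in_term_Fn. right. eauto. Qed.

Lemma subst_HU : forall P s t, (forall f n, sym_in_term f n t -> sym_in_program P f n) ->
  (forall x, in_HU P (s x)) -> in_HU P (subst_term s t).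
Proof.
  intros P s. induction t using term_ind'; intros Hsym Hs; simpl; auto.
  constructor.
  - rewrite length_map. apply Hsym. apply sym_in_term_Fn. left; auto.
  - apply Forall_forall. intros v Hv. apply in_map_iff in Hv. destruct Hv as [u [<- Hu]].
    rewrite Forall_forall in H. apply H; auto. intros f' n' Hs'. apply Hsym. eapply sym_subterm; eauto.
Qed.

Lemma ground_rule_atoms : forall P g b, ground_rule P g -> In b (rule_atoms g) -> ground_atom P b.
Proof.
  intros P g b [r [s [Hr [Hs ->]]]] Hb. rewrite rule_atoms_subst in Hb.
  apply in_map_iff in Hb. destruct Hb as [a [<- Ha]]. unfold ground_atom, subst_atom. simpl.
  apply Forall_forall. intros v Hv. apply in_map_iff in Hv. destruct Hv as [t [<- Ht]].
  apply subst_HU; auto. intros f n Hfn. exists r, a. repeat split; auto. exists t; auto.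
Qed.

Lemma depends_ground : forall P a b, ground_atom P a -> depends P a b -> ground_atom P b.
Proof.
  intros P a b Ha H. induction H; auto.
  destruct H as [g [Hg [_ Hb]]]. eapply ground_rule_atoms; eauto.
Qed.

Lemma HU_unbounded : forall P f n t0, sym_in_program P f n -> 0 < n -> in_HU P t0 ->
  forall K, exists t, in_HU P t /\ K < enc_term t.
Proof.
  intros P f n t0 Hs Hn Ht0 K. induction K.
  - exists (Fn f (repeat t0 n)). split.
    + constructor. rewrite repeat_length; auto. apply Forall_forall. intros u Hu. apply repeat_spec in Hu. subst; auto.
    + rewrite enc_term_Fn. pose proof (cpair_ge2 1 (cpair f (encl (map enc_term (repeat t0 n))))).
      pose proof (cpair_ge2 f (encl (map enc_term (repeat t0 n)))).
      destruct n. lia. simpl in *. lia.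
  - destruct IHK as [t [Ht HK]]. exists (Fn f (repeat t n)). split.
    + constructor. rewrite repeat_length; auto. apply Forall_forall. intros u Hu. apply repeat_spec in Hu. subst; auto.
    + assert (In (enc_term t) (map enc_term (repeat t n))).
      { apply in_map. destruct n. lia. simpl; auto. }
      pose proof (child_lt f _ _ H). lia.
Qed.

Lemma sum_bound : forall (l : list atom) b, In b l -> enc_atom b <= fold_right (fun a acc => enc_atom a + acc) 0 l.
Proof. induction l; simpl; intros b H; [tauto|]. destruct H; subst. lia. specialize (IHl b H). lia. Qed.

Lemma vars_in_head : forall P r h x (s : nat -> term),
  finitely_recursive P -> (exists f n, sym_in_program P f n /\ 0 < n) ->
  In r P -> In h (head r) -> (forall y, in_HU P (s y)) -> vin_rule x r -> vin_atom x h.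
Proof.
  intros P r h x s Hfr [f [n [Hsym Hn]]] Hr Hh Hs Hx.
  destruct (classic (vin_atom x h)) as [|Hnot]; auto. exfalso.
  set (A0 := subst_atom s h).
  assert (HgA : ground_atom P A0).
  { apply (ground_rule_atoms P (subst_rule s r)). exists r, s; auto.
    rewrite rule_atoms_subst. apply in_map. apply in_head_atoms; auto. }
  destruct (Hfr A0 HgA) as [L HL].
  set (K := fold_right (fun a acc => enc_atom a + acc) 0 L).
  destruct (HU_unbounded P f n (s 0) Hsym Hn (Hs 0) K) as [t [Ht HK]].
  set (st := fun y => if y =? x then t else s y).
  assert (Hst : forall y, in_HU P (st y)) by (intros y; unfold st; destruct (y =? x); auto).
  destruct Hx as [b [Hb [u [Hu Hv]]]].
  assert (Hdep : depends P A0 (subst_atom st b)).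
  { apply rt_step. exists (subst_rule st r). split. exists r, st; auto. split.
    - replace A0 with (subst_atom st h). simpl. apply in_map; auto.
      apply subst_atom_agree. intros y Hy. unfold st. destruct (Nat.eqb_spec y x); subst; auto. contradiction.
    - rewrite rule_atoms_subst. apply in_map; auto. }
  apply HL in Hdep. apply sum_bound in Hdep. fold K in Hdep.
  assert (enc_term t <= enc_term (subst_term st u)).
  { replace t with (st x) by (unfold st; rewrite Nat.eqb_refl; auto). apply vin_code; auto. }
  assert (enc_term (subst_term st u) < enc_atom (subst_atom st b)).
  { apply term_code_le_atom. simpl. apply in_map; auto. }
  lia.
Qed.

Lemma const_code : forall f t, sym_in_term f 0 t -> cpair 1 (cpair f 0) <= enc_term t.
Proof.
  intros f. induction t using term_ind'; intros Hs. apply sym_in_term_Var in Hs; tauto.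
  apply sym_in_term_Fn in Hs. destruct Hs as [[-> Hl]|[u [Hu Hs]]].
  - destruct ts; [|discriminate]. rewrite enc_term_Fn. simpl. lia.
  - rewrite Forall_forall in H. specialize (H u Hu Hs). pose proof (child_lt f0 ts (enc_term u) (in_map _ _ _ Hu)). lia.
Qed.

Lemma const_prog_code : forall P f, sym_in_program P f 0 -> enc_term (Fn f []) <= enc_program P.
Proof.
  intros P f [r [a [Hr [Ha [t [Ht Hs]]]]]]. apply const_code in Hs. rewrite enc_term_Fn. simpl encl.
  pose proof (term_code_le_atom a t Ht). pose proof (atom_code_le_rule r a Ha).
  pose proof (in_map_lt _ enc_rule P r Hr) as H3. rewrite <- enc_program_eq in H3. simpl in *. lia.
Qed.

Lemma prog_pos : forall P r, In r P -> 1 <= enc_program P.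
Proof. intros. destruct P. destruct H. rewrite enc_program_eq. simpl. lia. Qed.

Lemma HU_small : forall P t, (forall f n, sym_in_program P f n -> n = 0) -> P <> [] ->
  in_HU P t -> enc_term t <= enc_program P.
Proof.
  intros P t Hno HP Ht. inversion Ht as [f ts Hs Hall|Hnc]; subst.
  - pose proof (Hno _ _ Hs). destruct ts; [|discriminate]. apply const_prog_code; auto.
  - rewrite enc_term_Fn. replace (cpair 1 (cpair 0 (encl (map enc_term [])))) with 1 by reflexivity.
    destruct P as [|r P']. contradiction. apply (prog_pos (r :: P') r (or_introl eq_refl)).
Qed.

Lemma HU_small_exists : forall P, P <> [] -> exists t, in_HU P t /\ enc_term t <= enc_program P.
Proof.
  intros P HP. destruct (classic (exists f, sym_in_program P f 0)) as [[f Hf]|Hn].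
  - exists (Fn f []). split. constructor; auto. apply const_prog_code; auto.
  - exists (Fn 0 []). split. apply hu_default. intros f Hf; apply Hn; eauto.
    rewrite enc_term_Fn. replace (cpair 1 (cpair 0 (encl (map enc_term [])))) with 1 by reflexivity.
    destruct P as [|r P']. contradiction. apply (prog_pos (r :: P') r (or_introl eq_refl)).
Qed.

Definition Tl (p k : nat) : list nat := filter (fun c => n2b (inHU p c)) (rev (seq 0 (S k))).

Lemma Tl_spec : forall p k c, In c (Tl p k) <-> c <= k /\ n2b (inHU p c) = true.
Proof.
  intros. unfold Tl. rewrite filter_In, <- in_rev, in_seq. split; intros [H1 H2]; split; auto; lia.
Qed.

Lemma list_choice2 : forall (X Y : Type) (Q : Y -> X -> Prop) (L : list Y),
  (forall y, In y L -> exists x, Q y x) -> exists xs, Forall2 (fun x y => Q y x) xs L.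
Proof.
  induction L; intros H. exists []. constructor.
  destruct (H a (or_introl eq_refl)) as [t Ht]. destruct IHL as [ts Hts]. intros; apply H; right; auto.
  exists (t :: ts). constructor; auto.
Qed.

Lemma decode_tau : forall P k i, 0 < length (Tl (enc_program P) k) ->
  exists s : nat -> term, (forall x, enc_term (s x) = tau i (encl (Tl (enc_program P) k)) (length (Tl (enc_program P) k)) x)
                       /\ (forall x, in_HU P (s x)).
Proof.
  intros P k i Hpos.
  assert (H : forall x, exists t, enc_term t = tau i (encl (Tl (enc_program P) k)) (length (Tl (enc_program P) k)) x /\ in_HU P t).
  { intros x. apply inHU_sound. pose proof (tau_in i (encl (Tl (enc_program P) k)) (length (Tl (enc_program P) k)) x).
    rewrite decL_encl in H. specialize (H eq_refl Hpos). apply Tl_spec in H. tauto. }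
  destruct (choice _ H) as [s Hs]. exists s. split; intros; apply Hs.
Qed.

Lemma Tl_pos : forall P k, P <> [] -> enc_program P <= k -> 0 < length (Tl (enc_program P) k).
Proof.
  intros. destruct (HU_small_exists P H) as [t [Ht Hc]].
  assert (In (enc_term t) (Tl (enc_program P) k)).
  { apply Tl_spec. split. lia. apply inHU_complete; auto. }
  destruct (Tl (enc_program P) k); simpl in *. tauto. lia.
Qed.

Lemma find_i : forall P k r (s : nat -> term), In r P -> enc_program P <= k ->
  (forall x, in_HU P (s x)) -> (forall x, vin_rule x r -> enc_term (s x) <= k) ->
  exists i, i < length (Tl (enc_program P) k) ^ S (enc_program P) /\
    substR i (encl (Tl (enc_program P) k)) (length (Tl (enc_program P) k)) (enc_rule r) = enc_rule (subst_rule s r).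
Proof.
  intros P k r s Hr Hk Hs Hv.
  assert (HP : P <> []) by (intro; subst; destruct Hr).
  set (L := Tl (enc_program P) k). set (p := enc_program P).
  assert (Hpos : 0 < length L) by (apply Tl_pos; auto).
  set (v := fun x => if in_dec Nat.eq_dec (enc_term (s x)) L then enc_term (s x) else hd 0 L).
  assert (H1 : length L = length (decL (encl L))) by (rewrite decL_encl; auto).
  assert (H3 : forall x, x <= p -> In (v x) (decL (encl L))).
  { intros x _. rewrite decL_encl. unfold v. destruct (in_dec _ _ _); auto.
    destruct L; simpl in *. lia. auto. }
  destruct (tau_surj (encl L) (length L) p v H1 Hpos H3) as [i [Hi Htau]].
  exists i. split; auto.
  destruct (decode_tau P k i Hpos) as [s' [Hs' Hhu']].
  rewrite (substR_correct _ _ _ s'); auto. f_equal. apply subst_rule_agree.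
  intros x Hx. apply enc_term_inj. rewrite Hs'. fold L. rewrite Htau.
  - unfold v. destruct (in_dec _ _ _); auto. exfalso. apply n. apply Tl_spec. split. apply Hv; auto.
    apply inHU_complete; auto.
  - eapply vin_rule_bound; eauto.
Qed.

Lemma stableR_ext : forall R1 R2 D1 D2 M, (forall g, R1 g <-> R2 g) -> (forall a, M a -> D2 a) ->
  stableR R1 D1 M -> stableR R2 D2 M.
Proof.
  intros R1 R2 D1 D2 M HR HD [_ [Hm Hmin]]. split; [auto|split].
  - intros g Hg. apply Hm. apply HR; auto.
  - intros N HN HmN. apply Hmin; auto. intros g Hg. apply HmN. apply HR; auto.
Qed.

Lemma wf_head : forall P g, wf_program P -> ground_rule P g -> head g <> [].
Proof.
  intros P g Hwf [r [s [Hr [_ ->]]]]. simpl. specialize (Hwf r Hr). destruct (head r); simpl; congruence.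
Qed.

Lemma in_atomsG : forall G g b, In g G -> In b (rule_atoms g) -> In b (atomsG G).
Proof. intros. unfold atomsG. apply in_concat. exists (rule_atoms g). split; auto. apply in_map; auto. Qed.

Theorem soundness : forall P w, wf_program P -> finitely_recursive P ->
  Acc (enc_program P) w = true -> inconsistent P.
Proof.
  intros P w Hwf Hfr HAcc. unfold Acc in HAcc. cbv zeta in HAcc.
  set (p := enc_program P) in *. set (k := unp1 w) in *. set (Gc := unp2 w) in *.
  fold (Tl p k) in HAcc. set (L := Tl p k) in *.
  rewrite decL_encl in HAcc.
  repeat rewrite andb_true_iff in HAcc. destruct HAcc as [HC1 [HC2 [HC3 [HC5 HC4]]]].
  apply Nat.leb_le in HC5.
  assert (Hgr : forall c, In c (decL Gc) -> exists g, c = enc_rule g /\ ground_rule P g).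
  { intros c Hc. unfold C1 in HC1. rewrite forallb_forall in HC1. specialize (HC1 c Hc).
    apply existsb_exists in HC1. destruct HC1 as [rc [Hrc Hex]]. apply bex_spec in Hex.
    destruct Hex as [i [Hi Heq]]. apply Nat.eqb_eq in Heq.
    unfold p in Hrc. rewrite enc_program_eq, decL_encl in Hrc. apply in_map_iff in Hrc.
    destruct Hrc as [r [<- Hr]].
    assert (Hpos : 0 < length L).
    { destruct (length L); [simpl in Hi; lia | lia]. }
    destruct (decode_tau P k i Hpos) as [s [Hs Hhu]].
    rewrite (substR_correct _ _ _ s) in Heq by (intros; rewrite Hs; reflexivity).
    exists (subst_rule s r). split; auto. exists r, s; auto. }
  destruct (list_choice2 _ _ (fun c g => c = enc_rule g /\ ground_rule P g) (decL Gc) Hgr) as [Gl HGl].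
  assert (HmapG : map enc_rule Gl = decL Gc).
  { clear -HGl. induction HGl; simpl; auto. destruct H; subst; f_equal; auto. }
  assert (HgrG : forall g, In g Gl -> ground_rule P g).
  { clear -HGl. induction HGl; simpl; intros g Hg; [tauto|]. destruct Hg; subst. apply H. auto. }
  assert (HGc : Gc = encl (map enc_rule Gl)) by (rewrite HmapG, encl_decL; auto).
  rewrite HGc in HC1, HC2, HC3, HC4.
  rewrite (A_code Gl) in HC2, HC3, HC4.
  assert (CL : forall g, ground_rule P g -> (exists a, In a (head g) /\ In a (atomsG Gl)) -> In g Gl).
  { intros g [r [s [Hr [Hs ->]]]] [a [Ha HaG]].
    simpl in Ha. apply in_map_iff in Ha. destruct Ha as [h [<- Hh]].
    assert (Hb : forall x, vin_rule x r -> enc_term (s x) <= k).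
    { intros x Hx. destruct (classic (exists f n, sym_in_program P f n /\ 0 < n)) as [Hpos|Hno].
      - destruct (vars_in_head P r h x s Hfr Hpos Hr Hh Hs Hx) as [t [Ht Hvt]].
        pose proof (vin_code s x t Hvt).
        unfold C3 in HC3. rewrite forallb_forall in HC3.
        specialize (HC3 (enc_atom (subst_atom s h))). rewrite decL_encl in HC3.
        specialize (HC3 (in_map _ _ _ HaG)). rewrite forallb_forall in HC3.
        specialize (HC3 (enc_term (subst_term s t))). rewrite enc_atom_eq, unp2_cpair, decL_encl in HC3.
        assert (In (enc_term (subst_term s t)) (map enc_term (args (subst_atom s h)))).
        { apply in_map. simpl. apply in_map; auto. }
        specialize (HC3 H0). apply Nat.leb_le in HC3. lia.
      - assert (Hz : forall f n, sym_in_program P f n -> n = 0).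
        { intros f n Hfn. destruct n; auto. exfalso. apply Hno. exists f, (S n). split; auto. lia. }
        pose proof (HU_small P (s x) Hz). assert (P <> []) by (intro; subst; destruct Hr).
        specialize (H H0 (Hs x)). fold p in H. lia. }
    destruct (find_i P k r s Hr HC5 Hs Hb) as [i [Hi Heq]]. fold p L in Hi, Heq.
    unfold C2 in HC2. rewrite forallb_forall in HC2.
    assert (Hrc : In (enc_rule r) (decL p)) by (unfold p; rewrite enc_program_eq, decL_encl; apply in_map; auto).
    specialize (HC2 _ Hrc). rewrite ball_spec in HC2. specialize (HC2 i Hi).
    rewrite Heq, orb_true_iff in HC2. destruct HC2 as [HC2|HC2].
    - exfalso. apply negb_true_iff in HC2. rewrite <- not_true_iff_false in HC2. apply HC2.
      apply existsb_exists. exists (enc_atom (subst_atom s h)). split.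
      + rewrite head_enc. apply in_map. simpl. apply in_map; auto.
      + apply existsb_exists. exists (enc_atom (subst_atom s h)). rewrite decL_encl. split.
        apply in_map; auto. apply Nat.eqb_refl.
    - apply existsb_exists in HC2. destruct HC2 as [y [Hy Heqy]]. apply Nat.eqb_eq in Heqy.
      rewrite decL_encl in Hy. subst y. apply in_map_iff in Hy. destruct Hy as [g' [Hg' Hin]].
      apply enc_rule_inj in Hg'. subst; auto. }
  intros [M HM]. apply stable_equiv in HM.
  assert (Hst : stableR (fun g => In g Gl) (fun a => In a (atomsG Gl)) (fun a => M a /\ In a (atomsG Gl))).
  { apply stableR_ext with (R1 := restrictR (ground_rule P) (fun a => In a (atomsG Gl)))
                           (D1 := fun a => ground_atom P a /\ In a (atomsG Gl)).
    - intros g. unfold restrictR. split.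
      + intros [Hg Hh]. apply CL; auto.
      + intros Hg. split. apply HgrG; auto. pose proof (wf_head P g Hwf (HgrG g Hg)).
        destruct (head g) as [|a l] eqn:E. contradiction. exists a. split. simpl; auto.
        apply (in_atomsG Gl g); auto. apply in_head_atoms. rewrite E. simpl; auto.
    - intros a [_ Ha]; auto.
    - apply split_stable; auto. intros g Hg Hh b Hb. apply (in_atomsG Gl g); auto. }
  destruct (stableB_complete Gl _ Hst) as [j [Hj Hsb]].
  unfold C4 in HC4. rewrite ball_spec in HC4. rewrite decL_encl, length_map in HC4.
  specialize (HC4 j Hj). rewrite Hsb in HC4. discriminate.
Qed.

Definition decide (Q : Prop) : bool := if excluded_middle_informative Q then true else false.
Lemma decide_spec : forall Q, decide Q = true <-> Q.
Proof. intros. unfold decide. destruct (excluded_middle_informative Q); split; auto; discriminate. Qed.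

Lemma levels : forall P, finitely_recursive P -> forall n, exists Ul : list atom,
  forall b, In b Ul <-> exists a, ground_atom P a /\ enc_atom a < n /\ depends P a b.
Proof.
  intros P Hfr. induction n.
  - exists []. intros b. split; [simpl; tauto|]. intros [a [_ [H _]]]. lia.
  - destruct IHn as [Ul HUl].
    destruct (classic (exists a, ground_atom P a /\ enc_atom a = n)) as [[a [Ha Hc]]|Hno].
    + destruct (Hfr a Ha) as [L HL].
      exists (Ul ++ filter (fun b => decide (depends P a b)) L). intros b.
      rewrite in_app_iff, filter_In, HUl, decide_spec. split.
      * intros [[a' [H1 [H2 H3]]]|[_ H]]. exists a'; repeat split; auto; lia. exists a; repeat split; auto; lia.
      * intros [a' [H1 [H2 H3]]]. destruct (Nat.eq_dec (enc_atom a') n).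
        -- right. assert (a' = a) by (apply enc_atom_inj; congruence). subst. split; auto.
        -- left. exists a'; repeat split; auto; lia.
    + exists Ul. intros b. rewrite HUl. split.
      * intros [a' [H1 [H2 H3]]]. exists a'; repeat split; auto; lia.
      * intros [a' [H1 [H2 H3]]]. exists a'; repeat split; auto.
        destruct (Nat.eq_dec (enc_atom a') n); [|lia]. exfalso. apply Hno; eauto.
Qed.

Fixpoint sublists {X : Type} (l : list X) : list (list X) :=
  match l with [] => [[]] | x :: r => map (cons x) (sublists r) ++ sublists r end.

Lemma sublists_spec : forall (X : Type) (l : list X) (Q : X -> Prop),
  exists c, In c (sublists l) /\ forall a, In a c <-> Q a /\ In a l.
Proof.
  induction l as [|x l IH]; intros Q.
  - exists []. simpl. split; auto. tauto.
  - destruct (IH Q) as [c0 [Hc0 Hs]]. destruct (classic (Q x)) as [Qx|nQx].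
    + exists (x :: c0). split. simpl. apply in_or_app. left. apply in_map; auto.
      intros a. simpl. rewrite Hs. split.
      * intros [<-|[Qa Ha]]; auto.
      * intros [Qa [<-|Ha]]; auto.
    + exists c0. split. simpl. apply in_or_app. right; auto.
      intros a. simpl. rewrite Hs. split.
      * intros [Qa Ha]; auto.
      * intros [Qa [<-|Ha]]; auto. contradiction.
Qed.

Lemma stableR_eqv : forall R D M M', (forall a, M a <-> M' a) -> stableR R D M -> stableR R D M'.
Proof.
  intros R D M M' E [HD [Hm Hmin]]. split; [|split].
  - intros a Ha. apply HD, E; auto.
  - intros g Hg Hneg Hpos. destruct (Hm g Hg) as [b [Hb Mb]].
    + intros B HB MB. apply (Hneg B HB). apply E; auto.
    + intros B HB. apply E; auto.
    + exists b. split; auto. apply E; auto.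
  - intros N HN HmN a Ma. apply (Hmin N).
    + intros b Nb. apply E; auto.
    + intros g Hg Hneg Hpos. apply HmN; auto. intros B HB MB. apply (Hneg B HB). apply E; auto.
    + apply E; auto.
Qed.

Definition stab (P : program) (Ul : nat -> list atom) (n : nat) (M : atom -> Prop) : Prop :=
  stableR (restrictR (ground_rule P) (fun a => In a (Ul n))) (fun a => In a (Ul n)) M.

Definition levspec (P : program) (Ul : nat -> list atom) : Prop :=
  forall n b, In b (Ul n) <-> exists a, ground_atom P a /\ enc_atom a < n /\ depends P a b.

Lemma U_mono : forall P Ul, levspec P Ul -> forall n m b, n <= m -> In b (Ul n) -> In b (Ul m).
Proof.
  intros P Ul HU n m b Hnm Hb. apply HU in Hb. apply HU. destruct Hb as [a [H1 [H2 H3]]].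
  exists a; repeat split; auto; lia.
Qed.

Lemma U_closed : forall P Ul, levspec P Ul -> forall n, closedR (ground_rule P) (fun a => In a (Ul n)).
Proof.
  intros P Ul HU n g Hg [a [Ha HaU]] b Hb. apply HU in HaU. apply HU.
  destruct HaU as [a0 [H1 [H2 H3]]]. exists a0; repeat split; auto.
  eapply rt_trans; eauto. apply rt_step. exists g; auto.
Qed.

Lemma U_ground : forall P Ul, levspec P Ul -> forall n b, In b (Ul n) -> ground_atom P b.
Proof.
  intros P Ul HU n b Hb. apply HU in Hb. destruct Hb as [a [H1 [H2 H3]]]. eapply depends_ground; eauto.
Qed.

Lemma U_cover : forall P Ul, levspec P Ul -> forall a, ground_atom P a -> In a (Ul (S (enc_atom a))).
Proof. intros P Ul HU a Ha. apply HU. exists a; repeat split; auto. apply rt_refl. Qed.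

Lemma stab_restrict : forall P Ul, levspec P Ul -> forall n m M, n <= m -> stab P Ul m M ->
  stab P Ul n (fun a => M a /\ In a (Ul n)).
Proof.
  intros P Ul HU n m M Hnm Hst. unfold stab in *.
  eapply stableR_ext; [| |apply (split_stable _ _ _ (fun a => In a (Ul n)) Hst)].
  - intros g. unfold restrictR. split.
    + intros [[Hg _] Hh]; auto.
    + intros [Hg [a [Ha HaU]]]. split; [split|]; eauto. exists a; split; auto. eapply U_mono; eauto.
  - intros a [_ H]; auto.
  - intros g [Hg _] Hh b Hb. apply (U_closed P Ul HU n g Hg Hh b Hb).
Qed.

Definition good (P : program) (Ul : nat -> list atom) (n : nat) (c : list atom) : Prop :=
  forall m, n <= m -> exists M, stab P Ul m M /\ forall a, In a (Ul n) -> (M a <-> In a c).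

Lemma max_exists : forall (Q : list atom -> nat -> Prop) (Cs : list (list atom)) n0,
  (forall c, In c Cs -> exists m, n0 <= m /\ Q c m) ->
  exists mm, n0 <= mm /\ forall c, In c Cs -> exists m, m <= mm /\ n0 <= m /\ Q c m.
Proof.
  induction Cs; intros n0 H.
  - exists n0. split; auto. intros c [].
  - destruct (H a (or_introl eq_refl)) as [m [Hm HQ]].
    destruct (IHCs n0) as [mm [Hmm Hall]]. intros; apply H; right; auto.
    exists (Nat.max m mm). split. lia. intros c [<-|Hc].
    + exists m. repeat split; auto. lia.
    + destruct (Hall c Hc) as [m' [H1 [H2 H3]]]. exists m'. repeat split; auto. lia.
Qed.

Lemma good_step : forall P Ul, levspec P Ul -> forall n c, good P Ul n c ->
  exists c', good P Ul (S n) c' /\ forall a, In a (Ul n) -> (In a c' <-> In a c).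
Proof.
  intros P Ul HU n c Hg. apply NNPP. intros Hno.
  set (cond := fun c' => forall a, In a (Ul n) -> (In a c' <-> In a c)).
  set (Bad := fun c' m => cond c' -> ~ exists M, stab P Ul m M /\ forall a, In a (Ul (S n)) -> (M a <-> In a c')).
  assert (Hb : forall c', In c' (sublists (Ul (S n))) -> exists m, S n <= m /\ Bad c' m).
  { intros c' _. destruct (classic (cond c')) as [Hc|Hc].
    - assert (~ good P Ul (S n) c') by (intro; apply Hno; eauto).
      unfold good in H. apply not_all_ex_not in H. destruct H as [m Hm].
      apply imply_to_and in Hm. destruct Hm as [Hm1 Hm2]. exists m. split; auto. intros _; auto.
    - exists (S n). split; auto. intros Hc'; contradiction. }
  destruct (max_exists Bad _ (S n) Hb) as [mm [Hmm Hall]].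
  destruct (Hg mm) as [M [HM Hres]]. lia.
  destruct (sublists_spec _ (Ul (S n)) M) as [c'' [Hc'' Hspec]].
  destruct (Hall c'' Hc'') as [m [Hm1 [Hm2 Hbad]]].
  apply Hbad.
  - intros a Ha. rewrite Hspec, <- Hres by auto. split; [intros [H _]; auto|].
    intros H. split; auto. apply (U_mono P Ul HU n (S n) a); auto.
  - exists (fun a => M a /\ In a (Ul m)). split. apply (stab_restrict P Ul HU m mm M Hm1 HM).
    intros a Ha. rewrite Hspec. split; [intros [H _]; auto|]. intros [H _]; split; auto. eapply U_mono; eauto.
Qed.

Theorem compactness : forall P, wf_program P -> finitely_recursive P -> inconsistent P ->
  forall Ul, levspec P Ul -> exists n, ~ exists M, stab P Ul n M.
Proof.
  intros P Hwf Hfr Hinc Ul HU. apply NNPP. intros Hall.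
  assert (Hall' : forall m, exists M, stab P Ul m M).
  { intros m. apply NNPP. intros H. apply Hall. eauto. }
  assert (H0 : good P Ul 0 []).
  { intros m _. destruct (Hall' m) as [M HM]. exists M. split; auto.
    intros a Ha. apply HU in Ha. destruct Ha as [a' [_ [H _]]]. lia. }
  assert (Hst : forall x : nat * list atom, exists y, good P Ul (fst x) (snd x) ->
    good P Ul (S (fst x)) y /\ forall a, In a (Ul (fst x)) -> (In a y <-> In a (snd x))).
  { intros [n c]. simpl. destruct (classic (good P Ul n c)) as [Hg|Hg].
    - destruct (good_step P Ul HU n c Hg) as [c' Hc']. eauto.
    - exists []. intros; contradiction. }
  destruct (choice _ Hst) as [stepf Hstepf].
  set (sq := fix sq (n : nat) : list atom := match n with 0 => [] | S m => stepf (m, sq m) end).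
  assert (Hgood : forall n, good P Ul n (sq n)).
  { induction n. exact H0. apply (Hstepf (n, sq n)). exact IHn. }
  assert (Hchain : forall n a, In a (Ul n) -> (In a (sq (S n)) <-> In a (sq n))).
  { intros n. apply (Hstepf (n, sq n)). apply Hgood. }
  assert (Hcoh : forall n m a, n <= m -> In a (Ul n) -> (In a (sq m) <-> In a (sq n))).
  { intros n m a Hnm Ha. induction Hnm. tauto. rewrite <- IHHnm. apply Hchain. eapply U_mono; eauto. }
  set (Sn := fun n a => In a (Ul n) /\ In a (sq n)).
  assert (HSn : forall n, stab P Ul n (Sn n)).
  { intros n. destruct (Hgood n n (le_n n)) as [M [HM Hres]]. eapply stableR_eqv; [|exact HM].
    intros a. unfold Sn. split.
    - intros Ma. assert (In a (Ul n)) by (apply (proj1 HM); auto). split; auto. apply Hres; auto.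
    - intros [Ha Hs]. apply Hres; auto. }
  set (Mf := fun a => exists n, In a (Ul n) /\ In a (sq n)).
  assert (HMf : forall n a, In a (Ul n) -> (Mf a <-> Sn n a)).
  { intros n a Ha. unfold Mf, Sn. split.
    - intros [m [Hm Hs]]. split; auto. rewrite <- (Hcoh n (Nat.max n m) a) by (auto; lia).
      rewrite (Hcoh m (Nat.max n m) a) by (auto; lia). auto.
    - intros [H1 H2]. eauto. }
  apply Hinc. exists Mf. apply stable_equiv. split; [|split].
  - intros a [n [Ha _]]. eapply U_ground; eauto.
  - intros g Hg Hneg Hpos. pose proof (wf_head P g Hwf Hg).
    destruct (head g) as [|a0 l] eqn:E; [contradiction|].
    assert (Ha0 : ground_atom P a0).
    { apply (ground_rule_atoms P g); auto. apply in_head_atoms. rewrite E; simpl; auto. }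
    set (n := S (enc_atom a0)).
    assert (Hin : In a0 (Ul n)) by (apply (U_cover P Ul HU); auto).
    assert (Hcl : forall b, In b (rule_atoms g) -> In b (Ul n)).
    { intros b Hb. apply (U_closed P Ul HU n g Hg); auto. exists a0. rewrite E. simpl; auto. }
    destruct (proj1 (proj2 (HSn n)) g) as [b [Hb Sb]].
    + split; auto. exists a0. rewrite E. simpl; auto.
    + intros B HB SB. apply (Hneg B HB). apply (HMf n B); auto. apply Hcl, in_neg_atoms; auto.
    + intros B HB. apply (HMf n B). apply Hcl, in_pos_atoms; auto. apply Hpos; auto.
    + exists b. rewrite <- E. split; auto. apply (HMf n b); auto. apply Hcl. apply in_head_atoms; auto.
  - intros N HNM HN a [n [Ha Hs]].
    assert (Hcl : forall g, restrictR (ground_rule P) (fun a => In a (Ul n)) g ->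
                   forall b, In b (rule_atoms g) -> In b (Ul n)).
    { intros g [Hg Hh] b Hb. apply (U_closed P Ul HU n g Hg Hh b Hb). }
    assert (Sn n a) by (split; auto).
    apply (proj2 (proj2 (HSn n)) (fun b => N b /\ In b (Ul n))) in H.
    + destruct H; auto.
    + intros b [Nb Hb]. apply (HMf n b); auto.
    + intros g Hg Hneg Hpos. destruct (HN g (proj1 Hg)) as [b [Hb Nb]].
      * intros B HB MB. apply (Hneg B HB). apply (HMf n B); auto. apply (Hcl g Hg). apply in_neg_atoms; auto.
      * intros B HB. apply Hpos; auto.
      * exists b. split; auto. split; auto. apply (Hcl g Hg). apply in_head_atoms; auto.
Qed.

Fixpoint lists_of {X : Type} (k : nat) (xs : list X) : list (list X) :=
  match k with 0 => [[]] | S k' => flat_map (fun x => map (cons x) (lists_of k' xs)) xs end.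

Lemma lists_of_spec : forall (X : Type) (xs : list X) l, (forall y, In y l -> In y xs) -> In l (lists_of (length l) xs).
Proof.
  induction l; intros H; simpl; auto. apply in_flat_map. exists a. split. apply H; simpl; auto.
  apply in_map. apply IHl. intros; apply H; simpl; auto.
Qed.

Lemma rules_list : forall P (U : list atom), closedR (ground_rule P) (fun a => In a U) ->
  exists Gl : list rule, forall g, In g Gl <-> ground_rule P g /\ exists a, In a (head g) /\ In a U.
Proof.
  intros P U Hcl.
  set (Cand := flat_map (fun r => flat_map (fun h => map (fun b => Rule h b)
                 (lists_of (length (body r)) (map Pos U ++ map Neg U))) (lists_of (length (head r)) U)) P).
  exists (filter (fun g => decide (ground_rule P g /\ exists a, In a (head g) /\ In a U)) Cand).
  intros g. rewrite filter_In, decide_spec. split; [tauto|]. intros [Hg Hh]. refine (conj _ (conj Hg Hh)).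
  destruct Hg as [r [s [Hr [Hs Eg]]]].
  assert (Hall : forall b, In b (rule_atoms g) -> In b U).
  { intros b Hb. apply (Hcl g); auto. exists r, s; auto. }
  unfold Cand. apply in_flat_map. exists r. split; auto. apply in_flat_map. exists (head g). split.
  - rewrite Eg. simpl. rewrite <- (length_map (subst_atom s)). apply lists_of_spec.
    intros y Hy. apply Hall. rewrite Eg. apply in_head_atoms. simpl. auto.
  - apply in_map_iff. exists (body g). split. destruct g; auto.
    rewrite Eg. simpl. rewrite <- (length_map (subst_literal s)). apply lists_of_spec.
    intros y Hy. apply in_or_app. destruct y as [b|b]; [left|right]; apply in_map; apply Hall;
    rewrite Eg; unfold rule_atoms; apply in_or_app; right; simpl;
    apply in_map_iff; [exists (Pos b)|exists (Neg b)]; auto.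
Qed.

Theorem completeness : forall P, wf_program P -> finitely_recursive P -> inconsistent P ->
  exists w, Acc (enc_program P) w = true.
Proof.
  intros P Hwf Hfr Hinc.
  destruct (choice _ (levels P Hfr)) as [Ul HUl].
  assert (HU : levspec P Ul) by exact HUl.
  destruct (compactness P Hwf Hfr Hinc Ul HU) as [n Hn].
  set (U := Ul n).
  destruct (rules_list P U (U_closed P Ul HU n)) as [Gl HGl].
  assert (HatU : forall b, In b (atomsG Gl) -> In b U).
  { intros b Hb. unfold atomsG in Hb. apply in_concat in Hb. destruct Hb as [l [Hl Hb]].
    apply in_map_iff in Hl. destruct Hl as [g [<- Hg]]. apply HGl in Hg. destruct Hg as [Hg Hh].
    apply (U_closed P Ul HU n g Hg Hh b Hb). }
  assert (Hnost : ~ exists M, stableR (fun g => In g Gl) (fun a => In a (atomsG Gl)) M).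
  { intros [M HM]. apply Hn. exists M. unfold stab. eapply stableR_ext; [| |exact HM].
    - intros g. rewrite HGl. unfold restrictR. tauto.
    - intros a Ma. apply HatU. apply (proj1 HM); auto. }
  set (p := enc_program P).
  set (k := p + fold_right (fun a acc => enc_atom a + acc) 0 (atomsG Gl)).
  assert (Hk : forall a t, In a (atomsG Gl) -> In t (args a) -> enc_term t <= k).
  { intros a t Ha Ht. pose proof (term_code_le_atom a t Ht). pose proof (sum_bound _ a Ha). unfold k. lia. }
  assert (Hpk : p <= k) by (unfold k; lia).
  exists (cpair k (encl (map enc_rule Gl))). unfold Acc. cbv zeta.
  rewrite unp1_cpair, unp2_cpair. fold p. fold (Tl p k). rewrite decL_encl, A_code.
  set (L := Tl p k).
  assert (Hgr : forall g, In g Gl -> ground_rule P g) by (intros g Hg; apply HGl; auto).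
  repeat (apply andb_true_iff; split).
  -
    unfold C1. rewrite decL_encl, forallb_forall. intros c Hc. apply in_map_iff in Hc.
    destruct Hc as [g [<- Hg]]. pose proof (Hgr g Hg) as Hgg. destruct Hgg as [r [s [Hr [Hs Eg]]]].
    assert (Hb : forall x, vin_rule x r -> enc_term (s x) <= k).
    { intros x [b [Hb [t [Ht Hv]]]]. pose proof (vin_code s x t Hv).
      assert (In (subst_atom s b) (atomsG Gl)).
      { apply (in_atomsG Gl g); auto. rewrite Eg, rule_atoms_subst. apply in_map; auto. }
      assert (In (subst_term s t) (args (subst_atom s b))) by (simpl; apply in_map; auto).
      pose proof (Hk _ _ H0 H1). lia. }
    destruct (find_i P k r s Hr Hpk Hs Hb) as [i [Hi Heq]]. fold p L in Hi, Heq.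
    apply existsb_exists. exists (enc_rule r). split.
    + unfold p. rewrite enc_program_eq, decL_encl. apply in_map; auto.
    + apply bex_spec. exists i. split; auto. rewrite Heq, Eg. apply Nat.eqb_refl.
  -
    unfold C2. rewrite forallb_forall. intros rc Hrc. apply ball_spec. intros i Hi.
    unfold p in Hrc. rewrite enc_program_eq, decL_encl in Hrc. apply in_map_iff in Hrc.
    destruct Hrc as [r [<- Hr]].
    assert (Hpos : 0 < length L) by (destruct (length L); [simpl in Hi; lia | lia]).
    destruct (decode_tau P k i Hpos) as [s [Hs Hhu]]. fold p L in Hs.
    rewrite (substR_correct _ _ _ s) by (intros; rewrite Hs; reflexivity).
    destruct (existsb _ (decL (unp1 (enc_rule (subst_rule s r))))) eqn:E; simpl; auto.
    apply existsb_exists in E. destruct E as [c [Hc Hm]]. rewrite head_enc in Hc.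
    apply in_map_iff in Hc. destruct Hc as [a [<- Ha]].
    apply existsb_exists in Hm. destruct Hm as [y [Hy Hya]]. apply Nat.eqb_eq in Hya. subst y.
    rewrite decL_encl in Hy. apply in_map_iff in Hy. destruct Hy as [a' [Ha' Hin]].
    apply enc_atom_inj in Ha'. subst a'.
    apply existsb_exists. exists (enc_rule (subst_rule s r)). split; [|apply Nat.eqb_refl].
    rewrite decL_encl. apply in_map. apply HGl. split. exists r, s; auto. exists a; split; auto.
  -
    unfold C3. rewrite decL_encl, forallb_forall. intros c Hc. apply in_map_iff in Hc.
    destruct Hc as [a [<- Ha]]. rewrite forallb_forall. intros c Hc.
    rewrite enc_atom_eq, unp2_cpair, decL_encl in Hc. apply in_map_iff in Hc.
    destruct Hc as [t [<- Ht]]. apply Nat.leb_le. apply (Hk a); auto.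
  - apply Nat.leb_le; auto.
  -
    unfold C4. apply ball_spec. intros j Hj. apply negb_true_iff.
    destruct (stableB _ _ j) eqn:E; auto. exfalso. apply Hnost.
    eexists. apply stableB_sound; eauto.
Qed.

Theorem theorem5p1 :
  exists e : mu, forall P : program,
    wf_program P -> finitely_recursive P ->
    (halts e (enc_program P) <-> inconsistent P).
Proof.
  exists the_e. intros P Hwf Hfr. rewrite halts_the_e. split.
  - intros [w Hw]. eapply soundness; eauto.
  - intros Hinc. apply completeness; auto.
Qed.
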